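(* Let $0<q<1$, $M\in\mathbb{N}$, $r=q^{-M}$, and let $a,b,c,d,f,g,v,w$ be complex parameters with $\max\{|ac|,|ad|,|bc|,|bd|\}<1$. Then \begin{align*} &\int_c^d\frac{\left(\frac{qt}{c},\frac{qt}{d};q\right)_\infty}{(at,bt;q)_\infty}\sum_{k=0}^\infty\frac{\left(r,f,g,\frac{c}{t},\frac{q}{ad};q\right)_k\left(\frac{vw}{rfg}\right)^k}{\left(v,w,\frac{q}{at},q;q\right)_k}\;{}_3\Phi_3\left[\begin{matrix}rq^k,fq^k,gq^k;\\ vq^k,wq^k,0;\end{matrix}\;q;\,\frac{vw}{rfg}\right]{\rm d}_qt\\ &\qquad=\frac{d(1-q)\left(q,\frac{dq}{c},\frac{c}{d},abcd;q\right)_\infty}{(ac,ad,bc,bd;q)_\infty}\;{}_3\Phi_3\left[\begin{matrix}r,f,g;\\ v,w,0;\end{matrix}\;q;\,\frac{vwbc}{rfg}\right]. \end{align*}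
   Context: Throughout $0<q<1$. For complex $\alpha$: $(\alpha;q)_0=1$, $(\alpha;q)_n=\prod_{k=0}^{n-1}(1-\alpha q^k)$, $(\alpha;q)_\infty=\prod_{k=0}^\infty(1-\alpha q^k)$, and $(\alpha_1,\dots,\alpha_m;q)_n=(\alpha_1;q)_n\cdots(\alpha_m;q)_n$ (also for $n=\infty$). ${}_{3}\Phi_{3}\left[\begin{matrix}a_1,a_2,a_3;\\ b_1,b_2,b_3;\end{matrix}\,q;z\right]=\sum_{n=0}^\infty(-1)^nq^{\binom n2}\frac{(a_1,a_2,a_3;q)_n}{(b_1,b_2,b_3;q)_n}\frac{z^n}{(q;q)_n}$ (here $b_3=0$, so $(0;q)_n=1$). The $q$-integral is $\int_0^x F(t)\,{\rm d}_qt=x(1-q)\sum_{n=0}^\infty F(xq^n)q^n$ and $\int_c^dF(t)\,{\rm d}_qt=\int_0^dF(t)\,{\rm d}_qt-\int_0^cF(t)\,{\rm d}_qt$. *)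

(* Defs.v *)
From Stdlib Require Import Reals.
From Coquelicot Require Import Coquelicot.

Open Scope C_scope.

Fixpoint qpoch (al : C) (q : R) (n : nat) : C :=
  match n with
  | O => 1
  | S m => qpoch al q m * (1 - al * RtoC (q ^ m))
  end.

(* complex limit of a sequence: limits of real and imaginary parts
   (Coquelicot's total Lim_seq); equals the true limit when it exists *)
Definition Clim (u : nat -> C) : C :=
  (real (Lim_seq (fun n => fst (u n))), real (Lim_seq (fun n => snd (u n)))).

Definition qpoch_inf (al : C) (q : R) : C := Clim (fun n => qpoch al q n).

Fixpoint psum (u : nat -> C) (n : nat) : C :=
  match n with O => 0 | S m => psum u m + u m end.

Definition Cseries (u : nat -> C) : C := Clim (psum u).

Definition qbin2 (q : R) (n : nat) : R := (q ^ (Nat.div (n * (n - 1)) 2))%R.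

Definition Phi33 (a1 a2 a3 b1 b2 b3 : C) (q : R) (z : C) : C :=
  Cseries (fun n =>
    RtoC ((-1) ^ n * qbin2 q n)%R
    * (qpoch a1 q n * qpoch a2 q n * qpoch a3 q n)
    / (qpoch b1 q n * qpoch b2 q n * qpoch b3 q n)
    * Cpow z n / qpoch (RtoC q) q n).

Definition qint0 (F : C -> C) (x : C) (q : R) : C :=
  x * RtoC (1 - q) * Cseries (fun n => F (x * RtoC (q ^ n)) * RtoC (q ^ n)).

Definition qint (F : C -> C) (c d : C) (q : R) : C := qint0 F d q - qint0 F c q.

(* Main.v *)
Require Import Defs.
From Stdlib Require Import Reals Lra Lia Psatz Classical FunctionalExtensionality.
From Coquelicot Require Import Coquelicot.
Open Scope C_scope.

Definition Ccv (u : nat -> C) (l : C) : Prop :=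
  (is_lim_seq (fun n => Re (u n)) (Re l) /\ is_lim_seq (fun n => Im (u n)) (Im l)).

Lemma Ccv_Clim u l : Ccv u l -> Clim u = l.
Proof.
  intros [H1 H2]. unfold Clim. unfold Re, Im in *.
  rewrite (is_lim_seq_unique _ _ H1), (is_lim_seq_unique _ _ H2).
  destruct l; reflexivity.
Qed.

Lemma Ccv_unique u l1 l2 : Ccv u l1 -> Ccv u l2 -> l1 = l2.
Proof. intros H1 H2. rewrite <- (Ccv_Clim _ _ H1). apply Ccv_Clim; auto. Qed.

Lemma Ccv_ext u v l : (forall n, u n = v n) -> Ccv u l -> Ccv v l.
Proof.
  intros E [H1 H2]; split; eapply is_lim_seq_ext; try eassumption; intros n; simpl; rewrite E; auto.
Qed.

Lemma Ccv_ext_loc u v l N : (forall n, (N <= n)%nat -> u n = v n) -> Ccv u l -> Ccv v l.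
Proof.
  intros E [H1 H2]; split; eapply is_lim_seq_ext_loc; try eassumption;
  exists N; intros n Hn; rewrite E; auto.
Qed.

Lemma Ccv_const c : Ccv (fun _ => c) c.
Proof. split; apply is_lim_seq_const. Qed.

Lemma Ccv_plus u v l m : Ccv u l -> Ccv v m -> Ccv (fun n => u n + v n) (l + m).
Proof.
  intros [H1 H2] [H3 H4]; split; simpl.
  - apply (is_lim_seq_plus' _ _ _ _ H1 H3).
  - apply (is_lim_seq_plus' _ _ _ _ H2 H4).
Qed.

Lemma Ccv_opp u l : Ccv u l -> Ccv (fun n => - u n) (- l).
Proof.
  intros [H1 H2]; split; simpl.
  - exact (proj1 (is_lim_seq_opp _ _) H1).
  - exact (proj1 (is_lim_seq_opp _ _) H2).
Qed.

Lemma Ccv_minus u v l m : Ccv u l -> Ccv v m -> Ccv (fun n => u n - v n) (l - m).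
Proof. intros H1 H2. apply Ccv_plus; auto. apply Ccv_opp; auto. Qed.

Lemma Ccv_mult u v l m : Ccv u l -> Ccv v m -> Ccv (fun n => u n * v n) (l * m).
Proof.
  intros [H1 H2] [H3 H4]; split; simpl.
  - apply (is_lim_seq_minus' _ _ _ _ (is_lim_seq_mult' _ _ _ _ H1 H3) (is_lim_seq_mult' _ _ _ _ H2 H4)).
  - apply (is_lim_seq_plus' _ _ _ _ (is_lim_seq_mult' _ _ _ _ H1 H4) (is_lim_seq_mult' _ _ _ _ H2 H3)).
Qed.

Lemma Ccv_scal c u l : Ccv u l -> Ccv (fun n => c * u n) (c * l).
Proof. intros H. apply Ccv_mult; auto. apply Ccv_const. Qed.

Lemma Ccv_inv u l : Ccv u l -> l <> 0 -> Ccv (fun n => / u n) (/ l).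
Proof.
  intros [H1 H2] Hl.
  assert (Hd : (Re l * Re l + Im l * Im l <> 0)%R).
  { intro E. apply Hl. destruct l as [x y]; simpl in *.
    assert (x = 0)%R by nra. assert (y = 0)%R by nra. subst. reflexivity. }
  assert (HD : is_lim_seq (fun n => Re (u n) * Re (u n) + Im (u n) * Im (u n))%R (Re l * Re l + Im l * Im l)%R).
  { apply is_lim_seq_plus'; apply is_lim_seq_mult'; auto. }
  split.
  - replace (Re (/ l)) with (Re l / (Re l * Re l + Im l * Im l))%R
      by (destruct l; simpl; rewrite ?Rmult_1_r; reflexivity).
    eapply is_lim_seq_ext; [|apply (is_lim_seq_div' _ _ _ _ H1 HD Hd)].
    intros n; cbv beta; destruct (u n) as [x y]; simpl; rewrite ?Rmult_1_r; reflexivity.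
  - replace (Im (/ l)) with (- Im l / (Re l * Re l + Im l * Im l))%R
      by (destruct l; simpl; rewrite ?Rmult_1_r; reflexivity).
    eapply is_lim_seq_ext; [|apply (is_lim_seq_div' _ _ _ _ (proj1 (is_lim_seq_opp _ _) H2) HD Hd)].
    intros n; cbv beta; destruct (u n) as [x y]; simpl; rewrite ?Rmult_1_r; reflexivity.
Qed.

Lemma Ccv_div u v l m : Ccv u l -> Ccv v m -> m <> 0 -> Ccv (fun n => u n / v n) (l / m).
Proof. intros H1 H2 H3. apply Ccv_mult; auto. apply Ccv_inv; auto. Qed.

Lemma Ccv_shift u l K : Ccv u l -> Ccv (fun n => u (K + n)%nat) l.
Proof.
  intros [H1 H2]; split.
  - apply (is_lim_seq_incr_n _ K) in H1. eapply is_lim_seq_ext; [|exact H1].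
    intros n; simpl; f_equal; f_equal; lia.
  - apply (is_lim_seq_incr_n _ K) in H2. eapply is_lim_seq_ext; [|exact H2].
    intros n; simpl; f_equal; f_equal; lia.
Qed.

Lemma Cmod_le_sum z : (Cmod z <= Rabs (Re z) + Rabs (Im z))%R.
Proof.
  apply Rsqr_incr_0_var.
  - unfold Rsqr. pose proof (Cmod2_alt z). simpl in H.
    rewrite !Rmult_1_r in H. rewrite H.
    pose proof (Rabs_pos (Re z)). pose proof (Rabs_pos (Im z)).
    assert (HA: (Rabs (Re z) * Rabs (Re z) = Re z * Re z)%R) by (rewrite <- Rabs_mult; apply Rabs_right; nra).
    assert (HB: (Rabs (Im z) * Rabs (Im z) = Im z * Im z)%R) by (rewrite <- Rabs_mult; apply Rabs_right; nra).
    unfold Re, Im in *. nra.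
  - pose proof (Rabs_pos (Re z)). pose proof (Rabs_pos (Im z)). lra.
Qed.

Lemma Im_le_Cmod z : (Rabs (Im z) <= Cmod z)%R.
Proof. pose proof (Rmax_Cmod z). pose proof (Rmax_r (Rabs (fst z)) (Rabs (snd z))). unfold Im. lra. Qed.

Lemma Ccv_eps u l : (forall eps, (0 < eps)%R -> exists N, forall n, (N <= n)%nat -> (Cmod (u n - l) < eps)%R) -> Ccv u l.
Proof.
  intros H; split; apply is_lim_seq_Reals; intros eps Heps;
  destruct (H eps Heps) as [N HN]; exists N; intros n Hn; unfold R_dist;
  specialize (HN n ltac:(lia)).
  - pose proof (re_le_Cmod (u n - l)).
    replace (Re (u n) - Re l)%R with (Re (u n - l)) by (unfold Re; simpl; ring). lra.
  - pose proof (Im_le_Cmod (u n - l)).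
    replace (Im (u n) - Im l)%R with (Im (u n - l)) by (unfold Im; simpl; ring). lra.
Qed.

Lemma Ccv_eps_inv u l : Ccv u l -> (forall eps, (0 < eps)%R -> exists N, forall n, (N <= n)%nat -> (Cmod (u n - l) < eps)%R).
Proof.
  intros [H1 H2] eps Heps. apply is_lim_seq_Reals in H1. apply is_lim_seq_Reals in H2.
  destruct (H1 (eps/2)%R ltac:(lra)) as [N1 HN1].
  destruct (H2 (eps/2)%R ltac:(lra)) as [N2 HN2].
  exists (N1 + N2)%nat. intros n Hn.
  eapply Rle_lt_trans; [apply Cmod_le_sum|].
  specialize (HN1 n ltac:(lia)). specialize (HN2 n ltac:(lia)).
  unfold R_dist in *.
  replace (Re (u n) - Re l)%R with (Re (u n - l)) in HN1 by (unfold Re; simpl; ring).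
  replace (Im (u n) - Im l)%R with (Im (u n - l)) in HN2 by (unfold Im; simpl; ring). lra.
Qed.

Lemma Ccv_le u l a B : Ccv u l -> (forall n, (Cmod (u n - a) <= B)%R) -> (Cmod (l - a) <= B)%R.
Proof.
  intros H HB. apply Rnot_lt_le. intros Hlt.
  destruct (Ccv_eps_inv _ _ H (Cmod (l - a) - B)%R ltac:(lra)) as [N HN].
  specialize (HN N (le_n _)). specialize (HB N).
  assert (E : l - a = (u N - a) - (u N - l)) by ring.
  pose proof (Cmod_triangle (u N - a) (- (u N - l))). rewrite Cmod_opp in H0.
  replace (u N - a + - (u N - l)) with (l - a) in H0 by ring. lra.
Qed.

Lemma Ccv_geom u l q C0 : (0 <= q < 1)%R -> (forall n, (Cmod (u n - l) <= C0 * q ^ n)%R) -> Ccv u l.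
Proof.
  intros Hq H. apply Ccv_eps. intros eps Heps.
  assert (HC : (0 <= C0)%R). { specialize (H O). simpl in H. pose proof (Cmod_ge_0 (u O - l)). lra. }
  destruct (pow_lt_1_zero q ltac:(rewrite Rabs_right; lra) (eps / (C0 + 1))%R) as [N HN].
  { apply Rdiv_lt_0_compat; lra. }
  exists N. intros n Hn. specialize (HN n Hn). rewrite Rabs_right in HN by (apply Rle_ge, pow_le; lra).
  eapply Rle_lt_trans; [apply H|].
  apply Rmult_lt_compat_r with (r := (C0+1)%R) in HN; [|lra].
  unfold Rdiv in HN. rewrite Rmult_assoc, Rinv_l in HN by lra.
  assert (0 <= q ^ n)%R by (apply pow_le; lra). nra.
Qed.

Lemma RtoC_pow_S q n : RtoC (q ^ S n) = RtoC (q ^ n) * RtoC q.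
Proof. rewrite <- RtoC_mult. f_equal. simpl. ring. Qed.

Lemma RtoC_pow_add q n m : RtoC (q ^ (n + m)) = RtoC (q ^ n) * RtoC (q ^ m).
Proof. rewrite <- RtoC_mult. f_equal. apply pow_add. Qed.

Lemma Cmod_RtoC_pow q n : (0 <= q)%R -> Cmod (RtoC (q ^ n)) = (q ^ n)%R.
Proof. intros. rewrite Cmod_R. apply Rabs_right. apply Rle_ge, pow_le; auto. Qed.

Lemma diff_bound (u : nat -> C) q C0 : (0 <= q < 1)%R -> (forall n, (Cmod (u (S n) - u n) <= C0 * q ^ n)%R) ->
  forall n m, (Cmod (u (n + m)%nat - u n) <= C0 * q ^ n * (1 - q ^ m) / (1 - q))%R.
Proof.
  intros Hq H n m. induction m.
  - rewrite Nat.add_0_r. replace (u n - u n) with (RtoC 0) by ring. rewrite Cmod_0.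
    simpl. unfold Rdiv. rewrite Rminus_diag. lra.
  - replace (u (n + S m)%nat - u n) with ((u (S (n + m)) - u (n + m)%nat) + (u (n+m)%nat - u n))
      by (rewrite Nat.add_succ_r; ring).
    eapply Rle_trans; [apply Cmod_triangle|].
    specialize (H (n + m)%nat). rewrite pow_add, <- Rmult_assoc in H.
    replace (C0 * q ^ n * (1 - q ^ S m) / (1 - q))%R with
      (C0 * q ^ n * q ^ m + C0 * q ^ n * (1 - q ^ m) / (1 - q))%R
      by (simpl; field; lra).
    lra.
Qed.

Lemma cauchy_geom (u : nat -> C) q C0 : (0 <= q < 1)%R -> (forall n, (Cmod (u (S n) - u n) <= C0 * q ^ n)%R) ->
  exists l, Ccv u l /\ forall n, (Cmod (u n - l) <= C0 * q ^ n / (1 - q))%R.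
Proof.
  intros Hq H.
  assert (HC : (0 <= C0)%R). { specialize (H O). simpl in H. pose proof (Cmod_ge_0 (u 1%nat - u O)). lra. }
  pose proof (diff_bound u q C0 Hq H) as D.
  assert (D' : forall n m, (n <= m)%nat -> (Cmod (u m - u n) <= C0 * q ^ n / (1 - q))%R).
  { intros n m Hnm. replace m with (n + (m - n))%nat by lia.
    eapply Rle_trans; [apply D|]. unfold Rdiv. apply Rmult_le_compat_r.
    - apply Rlt_le, Rinv_0_lt_compat; lra.
    - assert (0 <= q ^ n)%R by (apply pow_le; lra). assert (0 <= q ^ (m-n))%R by (apply pow_le; lra).
      assert (0 <= C0 * q ^ n * q ^ (m - n))%R by (repeat apply Rmult_le_pos; auto). lra. }
  assert (Small : forall eps, (0 < eps)%R -> exists N, forall n m, (N <= n)%nat -> (N <= m)%nat -> (Cmod (u m - u n) < eps)%R).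
  { intros eps Heps.
    destruct (pow_lt_1_zero q ltac:(rewrite Rabs_right; lra) (eps * (1 - q) / (C0 + 1))%R) as [N HN].
    { apply Rdiv_lt_0_compat; [apply Rmult_lt_0_compat|]; lra. }
    exists N. intros n m Hn Hm.
    assert (Hb : forall k, (N <= k)%nat -> (C0 * q ^ k / (1 - q) < eps)%R).
    { intros k Hk. specialize (HN k Hk). rewrite Rabs_right in HN by (apply Rle_ge, pow_le; lra).
      apply (Rmult_lt_compat_r (C0+1)) in HN; [|lra].
      unfold Rdiv in *. rewrite Rmult_assoc, Rinv_l in HN by lra.
      assert (0 <= q ^ k)%R by (apply pow_le; lra).
      apply (Rmult_lt_reg_r (1 - q)); [lra|]. rewrite Rmult_assoc, Rinv_l by lra. nra. }
    destruct (Nat.le_ge_cases n m).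
    - eapply Rle_lt_trans; [apply D'; auto|]. apply Hb; auto.
    - rewrite <- Cmod_opp. replace (- (u m - u n)) with (u n - u m) by ring.
      eapply Rle_lt_trans; [apply D'; auto|]. apply Hb; auto. }
  assert (CR : Cauchy_crit (fun n => Re (u n))).
  { intros eps Heps. destruct (Small eps Heps) as [N HN]. exists N. intros n m Hn Hm.
    unfold R_dist. eapply Rle_lt_trans; [|apply (HN m n); lia].
    replace (Re (u n) - Re (u m))%R with (Re (u n - u m)) by (unfold Re; simpl; ring).
    apply re_le_Cmod. }
  assert (CI : Cauchy_crit (fun n => Im (u n))).
  { intros eps Heps. destruct (Small eps Heps) as [N HN]. exists N. intros n m Hn Hm.
    unfold R_dist. eapply Rle_lt_trans; [|apply (HN m n); lia].
    replace (Im (u n) - Im (u m))%R with (Im (u n - u m)) by (unfold Im; simpl; ring).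
    apply Im_le_Cmod. }
  destruct (Rcomplete.R_complete _ CR) as [lr Hr]. destruct (Rcomplete.R_complete _ CI) as [li Hi].
  assert (Hl : Ccv u (lr, li)).
  { split; apply is_lim_seq_Reals; auto. }
  exists (lr, li). split; auto.
  intros n. rewrite <- Cmod_opp. replace (- (u n - (lr, li))) with ((lr, li) - u n) by ring.
  apply (Ccv_le (fun m => u (n + m)%nat)).
  - apply Ccv_shift; auto.
  - intros m. apply D'. lia.
Qed.

Lemma psum_conv (u : nat -> C) q B : (0 <= q < 1)%R -> (forall n, (Cmod (u n) <= B * q ^ n)%R) ->
  exists l, Ccv (psum u) l /\ (Cmod l <= B / (1 - q))%R.
Proof.
  intros Hq H. destruct (cauchy_geom (psum u) q B Hq) as [l [Hl Hb]].
  { intros n. simpl. replace (psum u n + u n - psum u n) with (u n) by ring. auto. }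
  exists l. split; auto. specialize (Hb O). simpl in Hb.
  replace (0 - l) with (- l) in Hb by ring. rewrite Cmod_opp in Hb. lra.
Qed.

Lemma Cseries_cv u l : Ccv (psum u) l -> Cseries u = l.
Proof. apply Ccv_Clim. Qed.

Lemma psum_plus u v n : psum (fun k => u k + v k) n = psum u n + psum v n.
Proof. induction n; simpl; [ring|]. rewrite IHn. ring. Qed.

Lemma psum_scal c u n : psum (fun k => c * u k) n = c * psum u n.
Proof. induction n; simpl; [ring|]. rewrite IHn. ring. Qed.

Lemma psum_ext u v n : (forall k, (k < n)%nat -> u k = v k) -> psum u n = psum v n.
Proof. induction n; intros H; simpl; auto. rewrite IHn by (intros; apply H; lia). rewrite H by lia. auto. Qed.

Lemma psum_shift u n : psum u (S n) = u O + psum (fun k => u (S k)) n.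
Proof. induction n; simpl in *; [ring|]. rewrite IHn. ring. Qed.

Lemma Cseries_plus u v l m : Ccv (psum u) l -> Ccv (psum v) m -> Ccv (psum (fun k => u k + v k)) (l + m).
Proof. intros H1 H2. eapply Ccv_ext; [|apply (Ccv_plus _ _ _ _ H1 H2)]. intros n. rewrite psum_plus; auto. Qed.

Lemma Cseries_scal c u l : Ccv (psum u) l -> Ccv (psum (fun k => c * u k)) (c * l).
Proof. intros H1. eapply Ccv_ext; [|apply (Ccv_scal c _ _ H1)]. intros n. rewrite psum_scal; auto. Qed.

Lemma psum_zero_tail (u : nat -> C) N n : (forall k, (N <= k)%nat -> u k = 0) -> (N <= n)%nat -> psum u n = psum u N.
Proof.
  intros H Hn. induction Hn; auto. simpl. rewrite IHHn, H by lia. ring.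
Qed.

Lemma Cseries_finite (u : nat -> C) N : (forall k, (N <= k)%nat -> u k = 0) -> Cseries u = psum u N.
Proof.
  intros H. apply Cseries_cv. apply (Ccv_ext_loc (fun _ => psum u N) _ _ N).
  - intros n Hn. symmetry. apply psum_zero_tail; auto.
  - apply Ccv_const.
Qed.



Lemma Ccv_geom_N u l q C0 N : (0 <= q < 1)%R -> (0 <= C0)%R -> (forall n, (N <= n)%nat -> (Cmod (u n - l) <= C0 * q ^ n)%R) -> Ccv u l.
Proof.
  intros Hq HC H. apply Ccv_eps. intros eps Heps.
  destruct (pow_lt_1_zero q ltac:(rewrite Rabs_right; lra) (eps / (C0 + 1))%R) as [N1 HN].
  { apply Rdiv_lt_0_compat; lra. }
  exists (N + N1)%nat. intros n Hn. specialize (HN n ltac:(lia)). rewrite Rabs_right in HN by (apply Rle_ge, pow_le; lra).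
  eapply Rle_lt_trans; [apply H; lia|].
  apply Rmult_lt_compat_r with (r := (C0+1)%R) in HN; [|lra].
  unfold Rdiv in HN. rewrite Rmult_assoc, Rinv_l in HN by lra.
  assert (0 <= q ^ n)%R by (apply pow_le; lra). nra.
Qed.


Lemma pow_le1 q n : (0 <= q <= 1)%R -> (q ^ n <= 1)%R.
Proof. intros Hq. induction n; simpl; [lra|]. assert (0 <= q ^ n)%R by (apply pow_le; lra). nra. Qed.

Lemma qpoch_S y q n : qpoch y q (S n) = qpoch y q n * (1 - y * RtoC (q ^ n)).
Proof. reflexivity. Qed.

Lemma qpoch_shift1 y q n : qpoch y q (S n) = (1 - y) * qpoch (y * RtoC q) q n.
Proof.
  induction n.
  - simpl. replace (RtoC (q^0)) with (RtoC 1) by (f_equal; simpl; ring). ring.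
  - rewrite qpoch_S, IHn, qpoch_S, RtoC_pow_S. ring.
Qed.

Lemma qpoch_add y q k n : qpoch y q (k + n) = qpoch y q k * qpoch (y * RtoC (q ^ k)) q n.
Proof.
  induction n.
  - rewrite Nat.add_0_r. simpl. ring.
  - rewrite Nat.add_succ_r, qpoch_S, IHn, qpoch_S, RtoC_pow_add. ring.
Qed.

Lemma qpoch_zero q n : qpoch 0 q n = 1.
Proof. induction n; simpl; auto. rewrite IHn. ring. Qed.

Lemma qpoch_vanish y q j n : (j < n)%nat -> y * RtoC (q ^ j) = 1 -> qpoch y q n = 0.
Proof.
  intros Hj E. induction n; [lia|].
  destruct (Nat.eq_dec j n) as [->|Hne].
  - rewrite qpoch_S, E. ring.
  - rewrite qpoch_S, IHn by lia. ring.
Qed.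

Lemma qpoch_nz y q n : (forall j, (j < n)%nat -> y * RtoC (q ^ j) <> 1) -> qpoch y q n <> 0.
Proof.
  induction n; intros H.
  - simpl. apply C1_nz.
  - rewrite qpoch_S. apply Cmult_neq_0.
    + apply IHn. intros; apply H; lia.
    + apply Cminus_eq_contra. intro E. apply (H n); auto.
Qed.

Lemma Cmod_1_minus y q n : (0 <= q)%R -> (Cmod (1 - y * RtoC (q ^ n)) <= 1 + Cmod y * q ^ n)%R.
Proof.
  intros Hq. eapply Rle_trans; [apply Cmod_triangle|]. rewrite Cmod_opp, Cmod_1, Cmod_mult, Cmod_RtoC_pow by auto. lra.
Qed.

Lemma qpoch_bound y q n : (0 <= q < 1)%R -> (Cmod (qpoch y q n) <= exp (Cmod y * (1 - q ^ n) / (1 - q)))%R.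
Proof.
  intros Hq. induction n.
  - simpl. rewrite Cmod_1. replace (Cmod y * (1 - 1) / (1 - q))%R with 0%R by (field; lra). rewrite exp_0. lra.
  - rewrite qpoch_S, Cmod_mult.
    replace (Cmod y * (1 - q ^ S n) / (1 - q))%R with (Cmod y * (1 - q ^ n) / (1 - q) + Cmod y * q ^ n)%R
      by (simpl; field; lra).
    rewrite exp_plus.
    apply Rmult_le_compat; try apply Cmod_ge_0; auto.
    eapply Rle_trans; [apply Cmod_1_minus; lra|]. apply exp_ineq1_le.
Qed.

Lemma qpoch_bound' y q n : (0 <= q < 1)%R -> (Cmod (qpoch y q n) <= exp (Cmod y / (1 - q)))%R.
Proof.
  intros Hq. eapply Rle_trans; [apply qpoch_bound; auto|].
  destruct (Req_dec (Cmod y * (1 - q ^ n) / (1 - q)) (Cmod y / (1 - q))) as [E|E]; [rewrite E; lra|].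
  left. apply exp_increasing.
  assert (0 <= q ^ n)%R by (apply pow_le; lra). pose proof (Cmod_ge_0 y).
  assert (Cmod y * (1 - q ^ n) / (1 - q) <= Cmod y / (1 - q))%R.
  { unfold Rdiv. apply Rmult_le_compat_r; [apply Rlt_le, Rinv_0_lt_compat; lra|]. nra. }
  lra.
Qed.

Lemma qpoch_near1_aux y q n : (0 <= q < 1)%R -> (Cmod y / (1 - q) <= 1)%R ->
  ((1 + Cmod (qpoch y q n - 1)) * (1 - Cmod y * (1 - q ^ n) / (1 - q)) <= 1)%R.
Proof.
  intros Hq Hy. induction n.
  - simpl. replace (1 - 1) with (RtoC 0) by ring. rewrite Cmod_0.
    replace (Cmod y * (1 - 1) / (1 - q))%R with 0%R by (field; lra). lra.
  - set (e := Cmod (qpoch y q n - 1)) in *.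
    set (x := (Cmod y * q ^ n)%R).
    set (s := (Cmod y * (1 - q ^ n) / (1 - q))%R) in *.
    assert (Hs1 : (Cmod y * (1 - q ^ S n) / (1 - q) = s + x)%R) by (unfold s, x; simpl; field; lra).
    rewrite Hs1.
    assert (Hx : (0 <= x)%R) by (unfold x; apply Rmult_le_pos; [apply Cmod_ge_0|apply pow_le; lra]).
    assert (Hs : (0 <= s)%R).
    { unfold s. unfold Rdiv. apply Rmult_le_pos; [apply Rmult_le_pos; [apply Cmod_ge_0|]|apply Rlt_le, Rinv_0_lt_compat; lra].
      assert (q ^ n <= 1)%R by (apply pow_le1; lra). lra. }
    assert (Hsx : (s + x <= 1)%R).
    { rewrite <- Hs1. eapply Rle_trans; [|apply Hy]. unfold Rdiv. apply Rmult_le_compat_r; [apply Rlt_le, Rinv_0_lt_compat; lra|].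
      pose proof (Cmod_ge_0 y). assert (0 <= q ^ S n)%R by (apply pow_le; lra). nra. }
    assert (He : (0 <= e)%R) by apply Cmod_ge_0.
    assert (Hstep : (Cmod (qpoch y q (S n) - 1) <= e + (1 + e) * x)%R).
    { rewrite qpoch_S.
      replace (qpoch y q n * (1 - y * RtoC (q ^ n)) - 1) with ((qpoch y q n - 1) + - (qpoch y q n * (y * RtoC (q ^ n)))) by ring.
      eapply Rle_trans; [apply Cmod_triangle|]. rewrite Cmod_opp, !Cmod_mult, Cmod_RtoC_pow by lra.
      assert (Cmod (qpoch y q n) <= 1 + e)%R.
      { unfold e. replace (qpoch y q n) with ((qpoch y q n - 1) + 1) at 1 by ring.
        eapply Rle_trans; [apply Cmod_triangle|]. rewrite Cmod_1. lra. }
      apply Rplus_le_compat_l. apply Rmult_le_compat_r; auto. }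
    apply Rle_trans with ((1 + e) * (1 + x) * (1 - s - x))%R.
    + assert (0 <= 1 - (s + x))%R by lra.
      replace (1 - s - x)%R with (1 - (s + x))%R by ring.
      apply Rmult_le_compat_r; auto. lra.
    + assert ((1 + x) * (1 - s - x) <= 1 - s)%R by nra.
      apply Rle_trans with ((1 + e) * (1 - s))%R; [|lra].
      rewrite Rmult_assoc. apply Rmult_le_compat_l; lra.
Qed.

Lemma qpoch_near1 y q n : (0 <= q < 1)%R -> (Cmod y <= (1 - q) / 2)%R ->
  (Cmod (qpoch y q n - 1) <= 2 * Cmod y / (1 - q))%R.
Proof.
  intros Hq Hy.
  assert (Hy' : (Cmod y / (1 - q) <= 1/2)%R).
  { unfold Rdiv. apply (Rmult_le_reg_r (1 - q)); [lra|]. rewrite Rmult_assoc, Rinv_l by lra. lra. }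
  pose proof (qpoch_near1_aux y q n Hq ltac:(lra)).
  set (e := Cmod (qpoch y q n - 1)) in *.
  set (s := (Cmod y * (1 - q ^ n) / (1 - q))%R) in *.
  assert (Hs : (0 <= s <= Cmod y / (1 - q))%R).
  { unfold s. assert (0 <= q ^ n <= 1)%R by (split; [apply pow_le|apply pow_le1]; lra).
    pose proof (Cmod_ge_0 y). unfold Rdiv. split.
    - apply Rmult_le_pos; [|apply Rlt_le, Rinv_0_lt_compat; lra]. nra.
    - apply Rmult_le_compat_r; [apply Rlt_le, Rinv_0_lt_compat; lra|]. nra. }
  assert (e <= 2 * s)%R by nra.
  replace (2 * Cmod y / (1 - q))%R with (2 * (Cmod y / (1 - q)))%R by (field; lra). lra.
Qed.

Lemma qpoch_cv y q : (0 <= q < 1)%R -> Ccv (fun n => qpoch y q n) (qpoch_inf y q).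
Proof.
  intros Hq.
  destruct (cauchy_geom (fun n => qpoch y q n) q (exp (Cmod y / (1 - q)) * Cmod y)%R Hq) as [l [Hl _]].
  - intros n. rewrite qpoch_S.
    replace (qpoch y q n * (1 - y * RtoC (q ^ n)) - qpoch y q n) with (- (qpoch y q n * y * RtoC (q ^ n))) by ring.
    rewrite Cmod_opp, !Cmod_mult, Cmod_RtoC_pow by lra.
    apply Rmult_le_compat_r; [apply pow_le; lra|].
    apply Rmult_le_compat_r; [apply Cmod_ge_0|]. apply qpoch_bound'; auto.
  - unfold qpoch_inf. rewrite (Ccv_Clim _ _ Hl). auto.
Qed.

Lemma qpoch_inf_shift y q k : (0 <= q < 1)%R -> qpoch_inf y q = qpoch y q k * qpoch_inf (y * RtoC (q ^ k)) q.
Proof.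
  intros Hq. apply (Ccv_unique (fun n => qpoch y q (k + n))).
  - apply Ccv_shift. apply qpoch_cv; auto.
  - pose proof (Ccv_scal (qpoch y q k) _ _ (qpoch_cv (y * RtoC (q ^ k)) q Hq)) as H.
    eapply Ccv_ext; [|exact H]. intros n. simpl. rewrite qpoch_add. auto.
Qed.

Lemma qpoch_inf_shift1 y q : (0 <= q < 1)%R -> qpoch_inf y q = (1 - y) * qpoch_inf (y * RtoC q) q.
Proof.
  intros Hq. rewrite (qpoch_inf_shift y q 1 Hq).
  replace (qpoch y q 1) with (1 - y) by (simpl; ring).
  replace (RtoC (q ^ 1)) with (RtoC q) by (f_equal; simpl; ring). reflexivity.
Qed.

Lemma qpoch_inf_near1 y q : (0 <= q < 1)%R -> (Cmod y <= (1 - q) / 2)%R ->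
  (Cmod (qpoch_inf y q - 1) <= 2 * Cmod y / (1 - q))%R.
Proof.
  intros Hq Hy. apply (Ccv_le (fun n => qpoch y q n)).
  - apply qpoch_cv; auto.
  - intros n. apply qpoch_near1; auto.
Qed.

Lemma qpoch_inf_bound y q : (0 <= q < 1)%R -> (Cmod (qpoch_inf y q) <= exp (Cmod y / (1 - q)))%R.
Proof.
  intros Hq. replace (qpoch_inf y q) with (qpoch_inf y q - 0) by ring.
  apply (Ccv_le (fun n => qpoch y q n)).
  - apply qpoch_cv; auto.
  - intros n. replace (qpoch y q n - 0) with (qpoch y q n) by ring. apply qpoch_bound'; auto.
Qed.

Lemma qpoch_inf_bound2 y q Y : (0 <= q < 1)%R -> (Cmod y <= Y)%R -> (Cmod (qpoch_inf y q) <= exp (Y / (1 - q)))%R.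
Proof.
  intros Hq HY. eapply Rle_trans; [apply qpoch_inf_bound; auto|].
  destruct (Req_dec (Cmod y) Y) as [->|E]; [lra|]. left. apply exp_increasing.
  unfold Rdiv. apply Rmult_lt_compat_r; [apply Rinv_0_lt_compat; lra|lra].
Qed.

Lemma qpoch_inf_zero q : (0 <= q < 1)%R -> qpoch_inf 0 q = 1.
Proof.
  intros Hq. apply (Ccv_unique (fun n => qpoch 0 q n)).
  - apply qpoch_cv; auto.
  - eapply Ccv_ext; [|apply Ccv_const]. intros n; simpl. rewrite qpoch_zero; auto.
Qed.

Lemma qpoch_inf_vanish y q j : (0 <= q < 1)%R -> y * RtoC (q ^ j) = 1 -> qpoch_inf y q = 0.
Proof.
  intros Hq E. rewrite (qpoch_inf_shift y q (S j) Hq). rewrite (qpoch_vanish y q j (S j)); auto. ring.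
Qed.

Lemma finite_min (f : nat -> R) N : (forall m, (m < N)%nat -> (0 < f m)%R) ->
  exists d, (0 < d)%R /\ forall m, (m < N)%nat -> (d <= f m)%R.
Proof.
  induction N; intros H.
  - exists 1%R. split; [lra|]. intros; lia.
  - destruct IHN as [d [Hd Hm]]. { intros; apply H; lia. }
    exists (Rmin d (f N)). split.
    + apply Rmin_glb_lt; auto.
    + intros m Hm'. destruct (Nat.eq_dec m N) as [->|Hne].
      * apply Rmin_r.
      * eapply Rle_trans; [apply Rmin_l|]. apply Hm; lia.
Qed.

Lemma small_N (Y q e : R) : (0 <= q < 1)%R -> (0 < e)%R -> exists N, forall n, (N <= n)%nat -> (Y * q ^ n <= e)%R.
Proof.
  intros Hq He.
  destruct (pow_lt_1_zero q ltac:(rewrite Rabs_right; lra) (e / (Rabs Y + 1))%R) as [N HN].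
  { apply Rdiv_lt_0_compat; [lra|]. pose proof (Rabs_pos Y); lra. }
  exists N. intros n Hn. specialize (HN n Hn). rewrite Rabs_right in HN by (apply Rle_ge, pow_le; lra).
  pose proof (Rabs_pos Y). pose proof (Rle_abs Y).
  assert (0 <= q ^ n)%R by (apply pow_le; lra).
  apply Rmult_lt_compat_r with (r := (Rabs Y + 1)%R) in HN; [|lra].
  unfold Rdiv in HN. rewrite Rmult_assoc, Rinv_l in HN by lra. nra.
Qed.

Lemma Cmod_near1 z : (Cmod (z - 1) <= 1/2)%R -> (1/2 <= Cmod z)%R.
Proof.
  intros H. pose proof (Cmod_triangle z (-(z - 1))). rewrite Cmod_opp in H0.
  replace (z + - (z - 1)) with (RtoC 1) in H0 by ring. rewrite Cmod_1 in H0. lra.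
Qed.

Lemma Cmul_pow_assoc y q m j : y * RtoC (q ^ m) * RtoC (q ^ j) = y * RtoC (q ^ (m + j)).
Proof. rewrite RtoC_pow_add. ring. Qed.

Lemma qpoch_inf_lower y q : (0 <= q < 1)%R -> (forall j, y * RtoC (q ^ j) <> 1) ->
  exists d, (0 < d)%R /\ forall m, (d <= Cmod (qpoch_inf (y * RtoC (q ^ m)) q))%R.
Proof.
  intros Hq H.
  destruct (small_N (Cmod y) q ((1 - q) / 4) Hq ltac:(lra)) as [N HN].
  assert (Hbig : forall m, (N <= m)%nat -> (1/2 <= Cmod (qpoch_inf (y * RtoC (q ^ m)) q))%R).
  { intros m Hm. specialize (HN m Hm).
    assert (Hc : (Cmod (y * RtoC (q ^ m)) <= (1 - q) / 4)%R) by (rewrite Cmod_mult, Cmod_RtoC_pow; lra).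
    pose proof (qpoch_inf_near1 (y * RtoC (q ^ m)) q Hq ltac:(lra)) as H1.
    assert (2 * Cmod (y * RtoC (q ^ m)) / (1 - q) <= 1/2)%R.
    { apply (Rmult_le_reg_r (1 - q)); [lra|]. unfold Rdiv. rewrite Rmult_assoc, Rinv_l by lra. lra. }
    apply Cmod_near1. lra. }
  destruct (finite_min (fun m => Cmod (qpoch (y * RtoC (q ^ m)) q (N - m)%nat) / 2)%R N) as [d [Hd Hm]].
  { intros m Hm. apply Rdiv_lt_0_compat; [|lra]. apply Cmod_gt_0.
    apply qpoch_nz. intros j Hj. rewrite Cmul_pow_assoc. apply H. }
  exists (Rmin d (1/2)). split; [apply Rmin_glb_lt; lra|].
  intros m. destruct (Nat.lt_ge_cases m N) as [Hlt|Hge].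
  - apply Rle_trans with d; [apply Rmin_l|].
    apply Rle_trans with (Cmod (qpoch (y * RtoC (q ^ m)) q (N - m)) / 2)%R; [apply Hm; auto|].
    rewrite (qpoch_inf_shift _ q (N - m) Hq), Cmul_pow_assoc, Cmod_mult.
    replace (m + (N - m))%nat with N by lia.
    pose proof (Hbig N (le_n _)). pose proof (Cmod_ge_0 (qpoch (y * RtoC (q ^ m)) q (N - m))). nra.
  - apply Rle_trans with (1/2)%R; [apply Rmin_r|]. apply Hbig; auto.
Qed.

Lemma qpoch_inf_nz y q : (0 <= q < 1)%R -> (forall j, y * RtoC (q ^ j) <> 1) -> qpoch_inf y q <> 0.
Proof.
  intros Hq H. destruct (qpoch_inf_lower y q Hq H) as [d [Hd Hm]]. specialize (Hm O).
  replace (y * RtoC (q ^ 0)) with y in Hm by (simpl; ring). intro E. rewrite E, Cmod_0 in Hm. lra.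
Qed.

Lemma qpoch_inf_to1 y q : (0 <= q < 1)%R -> Ccv (fun n => qpoch_inf (y * RtoC (q ^ n)) q) 1.
Proof.
  intros Hq. destruct (small_N (Cmod y) q ((1 - q) / 2) Hq ltac:(lra)) as [N HN].
  apply (Ccv_geom_N _ _ q (2 * Cmod y / (1 - q)) N Hq).
  - unfold Rdiv. apply Rmult_le_pos; [pose proof (Cmod_ge_0 y); lra|apply Rlt_le, Rinv_0_lt_compat; lra].
  - intros n Hn. eapply Rle_trans; [apply qpoch_inf_near1; auto|].
    + rewrite Cmod_mult, Cmod_RtoC_pow by lra. auto.
    + rewrite Cmod_mult, Cmod_RtoC_pow by lra. right. field. lra.
Qed.

Definition wf (q : R) (a b c d : C) (t : C) : C :=
  qpoch_inf (RtoC q * t / c) q * qpoch_inf (RtoC q * t / d) q / (qpoch_inf (a * t) q * qpoch_inf (b * t) q).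

Definition adm (q : R) (y : C) : Prop := forall j, y * RtoC (q ^ j) <> 1.

Lemma Cmod_xq x q m : (0 <= q < 1)%R -> (Cmod (x * RtoC (q ^ m)) <= Cmod x)%R.
Proof.
  intros Hq. rewrite Cmod_mult, Cmod_RtoC_pow by lra. pose proof (Cmod_ge_0 x).
  assert (0 <= q ^ m <= 1)%R by (split; [apply pow_le|apply pow_le1]; lra). nra.
Qed.

Lemma inf_nz_lat y q m : (0 <= q < 1)%R -> adm q y -> qpoch_inf (y * RtoC (q ^ m)) q <> 0.
Proof.
  intros Hq H. destruct (qpoch_inf_lower y q Hq H) as [d [Hd Hm]]. specialize (Hm m).
  intro E. rewrite E, Cmod_0 in Hm. lra.
Qed.

Lemma adm_lat q y m : adm q y -> adm q (y * RtoC (q ^ m)).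
Proof. intros H j. rewrite Cmul_pow_assoc. apply H. Qed.

Lemma wf_bound q a b c d x : (0 <= q < 1)%R -> adm q (a * x) -> adm q (b * x) ->
  exists B, forall m, (Cmod (wf q a b c d (x * RtoC (q ^ m))) <= B)%R.
Proof.
  intros Hq Ha Hb.
  destruct (qpoch_inf_lower _ q Hq Ha) as [da [Hda Hma]].
  destruct (qpoch_inf_lower _ q Hq Hb) as [db [Hdb Hmb]].
  set (E1 := exp (Cmod (RtoC q * x / c) / (1 - q))).
  set (E2 := exp (Cmod (RtoC q * x / d) / (1 - q))).
  exists (E1 * E2 / (da * db))%R. intros m. unfold wf.
  replace (a * (x * RtoC (q ^ m))) with (a * x * RtoC (q ^ m)) by ring.
  replace (b * (x * RtoC (q ^ m))) with (b * x * RtoC (q ^ m)) by ring.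
  specialize (Hma m). specialize (Hmb m).
  assert (Hnz : qpoch_inf (a * x * RtoC (q ^ m)) q * qpoch_inf (b * x * RtoC (q ^ m)) q <> 0).
  { apply Cmult_neq_0; apply inf_nz_lat; auto. }
  rewrite Cmod_div by auto. rewrite !Cmod_mult.
  assert (H1 : (Cmod (qpoch_inf (RtoC q * (x * RtoC (q ^ m)) / c) q) <= E1)%R).
  { apply qpoch_inf_bound2; auto. replace (RtoC q * (x * RtoC (q ^ m)) / c) with (RtoC q * x / c * RtoC (q ^ m)).
    - apply Cmod_xq; auto.
    - unfold Cdiv. ring. }
  assert (H2 : (Cmod (qpoch_inf (RtoC q * (x * RtoC (q ^ m)) / d) q) <= E2)%R).
  { apply qpoch_inf_bound2; auto. replace (RtoC q * (x * RtoC (q ^ m)) / d) with (RtoC q * x / d * RtoC (q ^ m)).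
    - apply Cmod_xq; auto.
    - unfold Cdiv. ring. }
  unfold Rdiv. apply Rmult_le_compat.
  - apply Rmult_le_pos; apply Cmod_ge_0.
  - apply Rlt_le, Rinv_0_lt_compat. apply Rmult_lt_0_compat; lra.
  - apply Rmult_le_compat; auto; apply Cmod_ge_0.
  - apply Rinv_le_contravar; [apply Rmult_lt_0_compat; lra|]. apply Rmult_le_compat; lra.
Qed.

Definition lat (F : C -> C) (x : C) (q : R) (n : nat) : C := F (x * RtoC (q ^ n)) * RtoC (q ^ n).

Lemma lat_conv (F : C -> C) (x : C) (q : R) : (0 <= q < 1)%R -> (exists B, forall m, (Cmod (F (x * RtoC (q ^ m))%C) <= B)%R) ->
  exists l, Ccv (psum (lat F x q)) l.
Proof.
  intros Hq [B HB]. destruct (psum_conv (lat F x q) q B Hq) as [l [Hl _]].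
  - intros n. unfold lat. rewrite Cmod_mult, Cmod_RtoC_pow by lra. apply Rmult_le_compat_r; auto. apply pow_le; lra.
  - exists l; auto.
Qed.

Lemma qint0_lat (F : C -> C) (x : C) (q : R) (l : C) : Ccv (psum (lat F x q)) l -> qint0 F x q = x * RtoC (1 - q) * l.
Proof. intros H. unfold qint0. f_equal. apply Cseries_cv. auto. Qed.

Lemma wf_conv q a b c d x : (0 <= q < 1)%R -> adm q (a * x) -> adm q (b * x) ->
  exists l, Ccv (psum (lat (wf q a b c d) x q)) l.
Proof. intros Hq Ha Hb. apply lat_conv; auto. apply wf_bound; auto. Qed.

Lemma twf_conv q a b c d x : (0 <= q < 1)%R -> adm q (a * x) -> adm q (b * x) ->
  exists l, Ccv (psum (lat (fun t => t * wf q a b c d t) x q)) l.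
Proof.
  intros Hq Ha Hb. apply lat_conv; auto. destruct (wf_bound q a b c d x Hq Ha Hb) as [B HB].
  exists (Cmod x * B)%R. intros m. rewrite Cmod_mult. apply Rmult_le_compat; try apply Cmod_ge_0; auto.
  apply Cmod_xq; auto.
Qed.

Definition hf (q : R) (a b c d : C) (t : C) : C :=
  qpoch_inf (t / c) q * qpoch_inf (t / d) q / (qpoch_inf (a * t) q * qpoch_inf (b * t) q).

Lemma hf_step (q : R) (a b c d t : C) : (0 <= q < 1)%R -> c <> 0 -> d <> 0 ->
  qpoch_inf (a * t * RtoC q) q <> 0 -> qpoch_inf (b * t * RtoC q) q <> 0 ->
  1 - a * t <> 0 -> 1 - b * t <> 0 ->
  hf q a b c d t - hf q a b c d (t * RtoC q) =
  wf q a b c d t * ((a + b - / c - / d) * t + (/ (c * d) - a * b) * t * t).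
Proof.
  intros Hq Hc Hd HA HB Ha Hb. unfold hf, wf.
  rewrite (qpoch_inf_shift1 (a * t) q Hq), (qpoch_inf_shift1 (b * t) q Hq).
  rewrite (qpoch_inf_shift1 (t / c) q Hq), (qpoch_inf_shift1 (t / d) q Hq).
  replace (t / c * RtoC q) with (RtoC q * t / c) by (field; auto).
  replace (t / d * RtoC q) with (RtoC q * t / d) by (field; auto).
  replace (t * RtoC q / c) with (RtoC q * t / c) by (field; auto).
  replace (t * RtoC q / d) with (RtoC q * t / d) by (field; auto).
  replace (a * (t * RtoC q)) with (a * t * RtoC q) by ring.
  replace (b * (t * RtoC q)) with (b * t * RtoC q) by ring.
  field. repeat split; auto.
Qed.

Lemma psum_tele (g : nat -> C) N : psum (fun n => g n - g (S n)) N = g O - g N.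
Proof. induction N; simpl; [ring|]. rewrite IHN. ring. Qed.

Lemma tele (q : R) (a b c d x : C) : (0 <= q < 1)%R -> c <> 0 -> d <> 0 -> x <> 0 ->
  adm q (a * x) -> adm q (b * x) -> (x = c \/ x = d) ->
  (a + b - / c - / d) * qint0 (wf q a b c d) x q + (/ (c * d) - a * b) * qint0 (fun t => t * wf q a b c d t) x q
  = - RtoC (1 - q).
Proof.
  intros Hq Hc Hd Hx Ha Hb Hxcd.
  set (K1 := a + b - / c - / d). set (K2 := / (c * d) - a * b).
  assert (Hpt : forall n, hf q a b c d (x * RtoC (q ^ n)) - hf q a b c d (x * RtoC (q ^ S n)) =
     wf q a b c d (x * RtoC (q ^ n)) * (K1 * (x * RtoC (q ^ n)) + K2 * (x * RtoC (q ^ n)) * (x * RtoC (q ^ n)))).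
  { intros n. replace (x * RtoC (q ^ S n)) with (x * RtoC (q ^ n) * RtoC q) by (rewrite RtoC_pow_S; ring).
    apply hf_step; auto.
    - replace (a * (x * RtoC (q ^ n)) * RtoC q) with (a * x * RtoC (q ^ S n)) by (rewrite RtoC_pow_S; ring).
      apply inf_nz_lat; auto.
    - replace (b * (x * RtoC (q ^ n)) * RtoC q) with (b * x * RtoC (q ^ S n)) by (rewrite RtoC_pow_S; ring).
      apply inf_nz_lat; auto.
    - apply Cminus_eq_contra. intro E. apply (Ha n). rewrite E. ring.
    - apply Cminus_eq_contra. intro E. apply (Hb n). rewrite E. ring. }
  assert (H0 : hf q a b c d x = 0).
  { unfold hf. destruct Hxcd as [->| ->].
    - rewrite (qpoch_inf_vanish (c / c) q 0 Hq); [unfold Cdiv; ring|]. simpl. field; auto.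
    - rewrite (qpoch_inf_vanish (d / d) q 0 Hq); [unfold Cdiv; ring|]. simpl. field; auto. }
  assert (Hlim : Ccv (fun n => hf q a b c d (x * RtoC (q ^ n))) 1).
  { assert (L := Ccv_div _ _ _ _ (Ccv_mult _ _ _ _ (qpoch_inf_to1 (x / c) q Hq) (qpoch_inf_to1 (x / d) q Hq))
                 (Ccv_mult _ _ _ _ (qpoch_inf_to1 (a * x) q Hq) (qpoch_inf_to1 (b * x) q Hq)) ltac:(rewrite Cmult_1_l; apply C1_nz)).
    replace (1 * 1 / (1 * 1)) with (RtoC 1) in L by (field; apply C1_nz).
    eapply Ccv_ext; [|exact L]. intros n. unfold hf. cbv beta.
    replace (x / c * RtoC (q ^ n)) with (x * RtoC (q ^ n) / c) by (field; auto).
    replace (x / d * RtoC (q ^ n)) with (x * RtoC (q ^ n) / d) by (field; auto).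
    replace (a * x * RtoC (q ^ n)) with (a * (x * RtoC (q ^ n))) by ring.
    replace (b * x * RtoC (q ^ n)) with (b * (x * RtoC (q ^ n))) by ring. reflexivity. }
  assert (HS : Ccv (psum (fun n => wf q a b c d (x * RtoC (q ^ n)) * (K1 * (x * RtoC (q ^ n)) + K2 * (x * RtoC (q ^ n)) * (x * RtoC (q ^ n))))) (-1)).
  { assert (L := Ccv_minus _ _ _ _ (Ccv_const (hf q a b c d x)) Hlim).
    rewrite H0 in L. replace (0 - 1) with (RtoC (-1)) in L by ring.
    eapply Ccv_ext; [|exact L]. intros n. cbv beta.
    rewrite <- (psum_ext (fun k => hf q a b c d (x * RtoC (q ^ k)) - hf q a b c d (x * RtoC (q ^ S k)))) by (intros; apply Hpt).
    rewrite (psum_tele (fun k => hf q a b c d (x * RtoC (q ^ k)))).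
    replace (x * RtoC (q ^ 0)) with x by (simpl; ring). rewrite H0. ring. }
  destruct (wf_conv q a b c d x Hq Ha Hb) as [U HU].
  destruct (twf_conv q a b c d x Hq Ha Hb) as [V HV].
  assert (HS2 := Cseries_plus _ _ _ _ (Cseries_scal (K1 * x) _ _ HU) (Cseries_scal (K2 * x) _ _ HV)).
  assert (E : K1 * x * U + K2 * x * V = -1).
  { apply (Ccv_unique _ _ _ HS2). eapply Ccv_ext; [|exact HS]. intros n. apply psum_ext. intros k _.
    unfold lat. ring. }
  rewrite (qint0_lat _ _ _ _ HU), (qint0_lat _ _ _ _ HV).
  replace (- RtoC (1 - q)) with (RtoC (1 - q) * (-1)) by ring. rewrite <- E. ring.
Qed.

Definition J (q : R) (a b c d : C) : C := qint (wf q a b c d) c d q.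

Lemma adm_eq q y y' : y = y' -> adm q y -> adm q y'.
Proof. intros ->; auto. Qed.

Lemma wf_bq (q : R) (a b c d t : C) : (0 <= q < 1)%R ->
  qpoch_inf (a * t) q <> 0 -> qpoch_inf (b * t * RtoC q) q <> 0 -> 1 - b * t <> 0 ->
  wf q a (b * RtoC q) c d t = wf q a b c d t * (1 - b * t).
Proof.
  intros Hq HA HB Hb. unfold wf.
  rewrite (qpoch_inf_shift1 (b * t) q Hq).
  replace (b * RtoC q * t) with (b * t * RtoC q) by ring.
  field. repeat split; auto.
Qed.

Lemma qint0_bq (q : R) (a b c d x : C) : (0 <= q < 1)%R -> adm q (a * x) -> adm q (b * x) ->
  qint0 (wf q a (b * RtoC q) c d) x q = qint0 (wf q a b c d) x q - b * qint0 (fun t => t * wf q a b c d t) x q.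
Proof.
  intros Hq Ha Hb.
  destruct (wf_conv q a b c d x Hq Ha Hb) as [U HU].
  destruct (twf_conv q a b c d x Hq Ha Hb) as [V HV].
  assert (L := Cseries_plus _ _ _ _ HU (Cseries_scal (- b) _ _ HV)).
  assert (L' : Ccv (psum (lat (wf q a (b * RtoC q) c d) x q)) (U + - b * V)).
  { eapply Ccv_ext; [|exact L]. intros n. apply psum_ext. intros k _. unfold lat.
    rewrite wf_bq; auto.
    - ring.
    - replace (a * (x * RtoC (q ^ k))) with (a * x * RtoC (q ^ k)) by ring. apply inf_nz_lat; auto.
    - replace (b * (x * RtoC (q ^ k)) * RtoC q) with (b * x * RtoC (q ^ S k)) by (rewrite RtoC_pow_S; ring).
      apply inf_nz_lat; auto.
    - apply Cminus_eq_contra. intro E. apply (Hb k). rewrite E. ring. }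
  rewrite (qint0_lat _ _ _ _ HU), (qint0_lat _ _ _ _ HV), (qint0_lat _ _ _ _ L'). ring.
Qed.

Lemma Jrec (q : R) (a b c d : C) : (0 <= q < 1)%R -> c <> 0 -> d <> 0 ->
  adm q (a * c) -> adm q (a * d) -> adm q (b * c) -> adm q (b * d) ->
  (1 - a * b * c * d) * J q a (b * RtoC q) c d = (1 - b * c) * (1 - b * d) * J q a b c d.
Proof.
  intros Hq Hc Hd Hac Had Hbc Hbd. unfold J, qint.
  rewrite !qint0_bq by auto.
  pose proof (tele q a b c d c Hq Hc Hd Hc Hac Hbc (or_introl eq_refl)) as Tc.
  pose proof (tele q a b c d d Hq Hc Hd Hd Had Hbd (or_intror eq_refl)) as Td.
  set (Uc := qint0 (wf q a b c d) c q) in *.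
  set (Ud := qint0 (wf q a b c d) d q) in *.
  set (Vc := qint0 (fun t => t * wf q a b c d t) c q) in *.
  set (Vd := qint0 (fun t => t * wf q a b c d t) d q) in *.
  assert (E : (a + b - / c - / d) * (Ud - Uc) + (/ (c * d) - a * b) * (Vd - Vc) = 0).
  { replace (RtoC 0) with (- RtoC (1 - q) - - RtoC (1 - q)) by ring. rewrite <- Tc at 2. rewrite <- Td. ring. }
  transitivity ((1 - b * c) * (1 - b * d) * (Ud - Uc) + (- b * c * d) * ((a + b - / c - / d) * (Ud - Uc) + (/ (c * d) - a * b) * (Vd - Vc))).
  - field. auto.
  - rewrite E. ring.
Qed.

Definition Pb (q : R) (a c d : C) (b : C) : C := J q a b c d * qpoch_inf (b * c) q * qpoch_inf (b * d) q.

Lemma Pb_step (q : R) (a b c d : C) : (0 <= q < 1)%R -> c <> 0 -> d <> 0 ->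
  adm q (a * c) -> adm q (a * d) -> adm q (b * c) -> adm q (b * d) ->
  Pb q a c d b = (1 - a * b * c * d) * Pb q a c d (b * RtoC q).
Proof.
  intros Hq Hc Hd Hac Had Hbc Hbd. unfold Pb.
  rewrite (qpoch_inf_shift1 (b * c) q Hq), (qpoch_inf_shift1 (b * d) q Hq).
  replace (b * RtoC q * c) with (b * c * RtoC q) by ring.
  replace (b * RtoC q * d) with (b * d * RtoC q) by ring.
  transitivity ((1 - b * c) * (1 - b * d) * J q a b c d * qpoch_inf (b * c * RtoC q) q * qpoch_inf (b * d * RtoC q) q); [ring|].
  rewrite <- Jrec by auto. ring.
Qed.

Lemma Pb_iter (q : R) (a b c d : C) : (0 <= q < 1)%R -> c <> 0 -> d <> 0 ->
  adm q (a * c) -> adm q (a * d) -> adm q (b * c) -> adm q (b * d) ->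
  forall n, Pb q a c d b = qpoch (a * b * c * d) q n * Pb q a c d (b * RtoC (q ^ n)).
Proof.
  intros Hq Hc Hd Hac Had Hbc Hbd n. induction n.
  - simpl. replace (b * RtoC 1) with b by ring. ring.
  - rewrite IHn. rewrite (Pb_step q a (b * RtoC (q ^ n)) c d) by
      (auto; first [apply (adm_eq q (b * c * RtoC (q ^ n))); [ring|apply adm_lat; auto]
                   |apply (adm_eq q (b * d * RtoC (q ^ n))); [ring|apply adm_lat; auto]]).
    rewrite qpoch_S. replace (b * RtoC (q ^ n) * RtoC q) with (b * RtoC (q ^ S n)) by (rewrite RtoC_pow_S; ring).
    ring.
Qed.

Lemma adm0 q x : adm q (0 * x).
Proof. intros j E. replace (0 * x * RtoC (q ^ j)) with (RtoC 0) in E by ring. apply C1_nz. rewrite <- E. auto. Qed.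

Lemma wf_b0 (q : R) (a b c d t : C) : (0 <= q < 1)%R ->
  qpoch_inf (a * t) q <> 0 -> qpoch_inf (b * t) q <> 0 ->
  wf q a b c d t = wf q a 0 c d t / qpoch_inf (b * t) q.
Proof.
  intros Hq HA HB. unfold wf. replace (0 * t) with (RtoC 0) by ring. rewrite qpoch_inf_zero by auto.
  field. repeat split; auto.
Qed.

Lemma qint0_cont (q : R) (a b c d x : C) : (0 <= q < 1)%R -> adm q (a * x) -> adm q (b * x) ->
  Ccv (fun n => qint0 (wf q a (b * RtoC (q ^ n)) c d) x q) (qint0 (wf q a 0 c d) x q).
Proof.
  intros Hq Ha Hb.
  destruct (wf_bound q a 0 c d x Hq Ha (adm0 q x)) as [W0 HW0].
  assert (HW0p : (0 <= W0)%R) by (eapply Rle_trans; [apply Cmod_ge_0|apply (HW0 O)]).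
  destruct (small_N (Cmod (b * x)) q ((1 - q) / 4) Hq ltac:(lra)) as [N0 HN0].
  destruct (wf_conv q a 0 c d x Hq Ha (adm0 q x)) as [U0 HU0].
  apply (Ccv_geom_N _ _ q (Cmod x * (W0 * (4 * Cmod (b * x) / (1 - q))))%R N0 Hq).
  { apply Rmult_le_pos; [apply Cmod_ge_0|]. apply Rmult_le_pos; auto.
    unfold Rdiv. apply Rmult_le_pos; [pose proof (Cmod_ge_0 (b * x)); lra|apply Rlt_le, Rinv_0_lt_compat; lra]. }
  intros n Hn. set (b' := b * RtoC (q ^ n)).
  assert (Hb' : adm q (b' * x)) by (apply (adm_eq q (b * x * RtoC (q ^ n))); [unfold b'; ring|apply adm_lat; auto]).
  destruct (wf_conv q a b' c d x Hq Ha Hb') as [Un HUn].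
  assert (Hsm : (Cmod (b' * x) <= (1 - q) / 4)%R).
  { replace (b' * x) with (b * x * RtoC (q ^ n)) by (unfold b'; ring). rewrite Cmod_mult, Cmod_RtoC_pow by lra. auto. }
  set (Bn := (W0 * (4 * Cmod (b' * x) / (1 - q)))%R).
  assert (Hterm : forall m, (Cmod (lat (wf q a b' c d) x q m + - (1) * lat (wf q a 0 c d) x q m) <= Bn * q ^ m)%R).
  { intros m. unfold lat. set (t := x * RtoC (q ^ m)).
    assert (Hbt : (Cmod (b' * t) <= (1 - q) / 4)%R).
    { eapply Rle_trans; [|apply Hsm]. replace (b' * t) with (b' * x * RtoC (q ^ m)) by (unfold t; ring). apply Cmod_xq; auto. }
    pose proof (qpoch_inf_near1 (b' * t) q Hq ltac:(lra)) as Hn1.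
    assert (HB2 : (1/2 <= Cmod (qpoch_inf (b' * t) q))%R).
    { apply Cmod_near1. eapply Rle_trans; [apply Hn1|]. apply (Rmult_le_reg_r (1 - q)); [lra|].
      unfold Rdiv. rewrite Rmult_assoc, Rinv_l by lra. lra. }
    assert (HBnz : qpoch_inf (b' * t) q <> 0) by (intro E; rewrite E, Cmod_0 in HB2; lra).
    assert (HAnz : qpoch_inf (a * t) q <> 0).
    { replace (a * t) with (a * x * RtoC (q ^ m)) by (unfold t; ring). apply inf_nz_lat; auto. }
    rewrite (wf_b0 q a b' c d t Hq HAnz HBnz).
    replace (wf q a 0 c d t / qpoch_inf (b' * t) q * RtoC (q ^ m) + - (1) * (wf q a 0 c d t * RtoC (q ^ m)))
      with (wf q a 0 c d t * ((1 - qpoch_inf (b' * t) q) / qpoch_inf (b' * t) q) * RtoC (q ^ m)) by (field; auto).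
    rewrite !Cmod_mult, Cmod_RtoC_pow by lra. apply Rmult_le_compat_r; [apply pow_le; lra|].
    unfold Bn. apply Rmult_le_compat; try apply Cmod_ge_0; [apply HW0|].
    rewrite Cmod_div by auto.
    rewrite <- Cmod_opp. replace (- (1 - qpoch_inf (b' * t) q)) with (qpoch_inf (b' * t) q - 1) by ring.
    assert (Hxt : (2 * Cmod (b' * t) / (1 - q) <= 2 * Cmod (b' * x) / (1 - q))%R).
    { unfold Rdiv. apply Rmult_le_compat_r; [apply Rlt_le, Rinv_0_lt_compat; lra|].
      apply Rmult_le_compat_l; [lra|]. replace (b' * t) with (b' * x * RtoC (q ^ m)) by (unfold t; ring). apply Cmod_xq; auto. }
    unfold Rdiv at 1. apply Rle_trans with ((2 * Cmod (b' * x) / (1 - q)) * 2)%R.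
    + apply Rmult_le_compat; [apply Cmod_ge_0|apply Rlt_le, Rinv_0_lt_compat; lra|lra|].
      rewrite <- (Rinv_inv 2). apply Rinv_le_contravar; lra.
    + right. field. lra. }
  destruct (psum_conv _ q Bn Hq Hterm) as [l [Hl Hlb]].
  assert (El : l = Un + - (1) * U0) by (apply (Ccv_unique _ _ _ Hl); apply Cseries_plus; auto; apply Cseries_scal; auto).
  rewrite (qint0_lat _ _ _ _ HUn), (qint0_lat _ _ _ _ HU0).
  replace (x * RtoC (1 - q) * Un - x * RtoC (1 - q) * U0) with (x * RtoC (1 - q) * l) by (rewrite El; ring).
  apply Rle_trans with (Cmod x * (1 - q) * (Bn / (1 - q)))%R.
  - rewrite !Cmod_mult, Cmod_R, Rabs_right by lra.
    apply Rmult_le_compat_l; auto. apply Rmult_le_pos; [apply Cmod_ge_0|lra].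
  - right. unfold Bn. replace (b' * x) with (b * x * RtoC (q ^ n)) by (unfold b'; ring).
    rewrite (Cmod_mult (b * x)), Cmod_RtoC_pow by lra. field. lra.
Qed.

Lemma Pb_cont (q : R) (a b c d : C) : (0 <= q < 1)%R ->
  adm q (a * c) -> adm q (a * d) -> adm q (b * c) -> adm q (b * d) ->
  Ccv (fun n => Pb q a c d (b * RtoC (q ^ n))) (J q a 0 c d).
Proof.
  intros Hq Hac Had Hbc Hbd.
  assert (L1 := Ccv_minus _ _ _ _ (qint0_cont q a b c d d Hq Had Hbd) (qint0_cont q a b c d c Hq Hac Hbc)).
  assert (L := Ccv_mult _ _ _ _ (Ccv_mult _ _ _ _ L1 (qpoch_inf_to1 (b * c) q Hq)) (qpoch_inf_to1 (b * d) q Hq)).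
  replace (J q a 0 c d) with ((qint0 (wf q a 0 c d) d q - qint0 (wf q a 0 c d) c q) * 1 * 1) by (unfold J, qint; ring).
  eapply Ccv_ext; [|exact L]. intros n. unfold Pb, J, qint. cbv beta.
  replace (b * RtoC (q ^ n) * c) with (b * c * RtoC (q ^ n)) by ring.
  replace (b * RtoC (q ^ n) * d) with (b * d * RtoC (q ^ n)) by ring. reflexivity.
Qed.

Lemma Jb0 (q : R) (a b c d : C) : (0 <= q < 1)%R -> c <> 0 -> d <> 0 ->
  adm q (a * c) -> adm q (a * d) -> adm q (b * c) -> adm q (b * d) ->
  J q a b c d * qpoch_inf (b * c) q * qpoch_inf (b * d) q = qpoch_inf (a * b * c * d) q * J q a 0 c d.
Proof.
  intros Hq Hc Hd Hac Had Hbc Hbd. fold (Pb q a c d b).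
  apply (Ccv_unique (fun n => qpoch (a * b * c * d) q n * Pb q a c d (b * RtoC (q ^ n)))).
  - eapply Ccv_ext; [|apply Ccv_const]. intros n. cbv beta. rewrite <- Pb_iter; auto.
  - apply Ccv_mult; [apply qpoch_cv; auto|]. apply Pb_cont; auto.
Qed.

Lemma wf_sym (q : R) (a b c d t : C) : wf q a b c d t = wf q b a c d t.
Proof. unfold wf. rewrite (Cmult_comm (qpoch_inf (a * t) q)). reflexivity. Qed.

Lemma J_sym (q : R) (a b c d : C) : J q a b c d = J q b a c d.
Proof.
  assert (Hf : wf q a b c d = wf q b a c d) by (apply functional_extensionality; intros; apply wf_sym).
  unfold J. rewrite Hf. reflexivity.
Qed.

Lemma JJ00 (q : R) (a b c d : C) : (0 <= q < 1)%R -> c <> 0 -> d <> 0 ->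
  adm q (a * c) -> adm q (a * d) -> adm q (b * c) -> adm q (b * d) ->
  J q a b c d * (qpoch_inf (a * c) q * qpoch_inf (a * d) q * qpoch_inf (b * c) q * qpoch_inf (b * d) q)
  = qpoch_inf (a * b * c * d) q * J q 0 0 c d.
Proof.
  intros Hq Hc Hd Hac Had Hbc Hbd.
  transitivity ((J q a b c d * qpoch_inf (b * c) q * qpoch_inf (b * d) q) * (qpoch_inf (a * c) q * qpoch_inf (a * d) q)); [ring|].
  rewrite Jb0 by auto. rewrite J_sym.
  transitivity (qpoch_inf (a * b * c * d) q * (J q 0 a c d * qpoch_inf (a * c) q * qpoch_inf (a * d) q)); [ring|].
  rewrite Jb0 by (auto; apply adm0). replace (0 * a * c * d) with (RtoC 0) by ring.
  rewrite qpoch_inf_zero by auto. ring.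
Qed.

Lemma adm_small q y : (0 <= q < 1)%R -> (Cmod y < 1)%R -> adm q y.
Proof.
  intros Hq Hy j E. pose proof (Cmod_xq y q j Hq). rewrite E, Cmod_1 in H. lra.
Qed.

Lemma geom_C q : (0 <= q < 1)%R -> Ccv (psum (fun m => RtoC (q ^ m))) (RtoC (/ (1 - q))).
Proof.
  intros Hq. apply (Ccv_geom_N _ _ q (/ (1 - q)) O Hq).
  - apply Rlt_le, Rinv_0_lt_compat; lra.
  - intros n _. assert (E : psum (fun m => RtoC (q ^ m)) n = RtoC ((1 - q ^ n) / (1 - q))).
    { induction n; simpl psum.
      - f_equal. simpl. field. lra.
      - rewrite IHn, <- RtoC_plus. f_equal. simpl. field. lra. }
    rewrite E, <- RtoC_minus, Cmod_R.
    replace ((1 - q ^ n) / (1 - q) - / (1 - q))%R with (- (q ^ n / (1 - q)))%R by (field; lra).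
    rewrite Rabs_Ropp, Rabs_right.
    + right. unfold Rdiv. ring.
    + apply Rle_ge. unfold Rdiv. apply Rmult_le_pos; [apply pow_le; lra|apply Rlt_le, Rinv_0_lt_compat; lra].
Qed.

Lemma Ccv_unshift u l K : Ccv (fun n => u (K + n)%nat) l -> Ccv u l.
Proof.
  intros [H1 H2]; split.
  - apply (is_lim_seq_incr_n _ K). eapply is_lim_seq_ext; [|exact H1]. intros n; simpl; f_equal; f_equal; lia.
  - apply (is_lim_seq_incr_n _ K). eapply is_lim_seq_ext; [|exact H2]. intros n; simpl; f_equal; f_equal; lia.
Qed.

Lemma psum_add u K n : psum u (K + n) = psum u K + psum (fun i => u (K + i)%nat) n.
Proof. induction n; simpl; [rewrite Nat.add_0_r; ring|]. rewrite Nat.add_succ_r. simpl. rewrite IHn. ring. Qed.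

Lemma qint0_shift (F : C -> C) (x : C) (q : R) K : (0 <= q < 1)%R ->
  (forall m, (m < K)%nat -> F (x * RtoC (q ^ m)) = 0) ->
  (exists l, Ccv (psum (lat F (x * RtoC (q ^ K)) q)) l) ->
  qint0 F x q = qint0 F (x * RtoC (q ^ K)) q.
Proof.
  intros Hq HF [l Hl].
  assert (H0 : psum (lat F x q) K = 0).
  { rewrite (psum_ext _ (fun _ => 0)). { clear. induction K; simpl; [auto|rewrite IHK; ring]. }
    intros k Hk. unfold lat. rewrite HF; auto. ring. }
  assert (Hx : Ccv (psum (lat F x q)) (RtoC (q ^ K) * l)).
  { apply (Ccv_unshift _ _ K). eapply Ccv_ext; [|apply (Ccv_scal (RtoC (q ^ K))); exact Hl].
    intros n. cbv beta. rewrite psum_add, H0, <- psum_scal. rewrite Cplus_0_l. apply psum_ext. intros i _.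
    unfold lat. rewrite RtoC_pow_add. replace (x * (RtoC (q ^ K) * RtoC (q ^ i))) with (x * RtoC (q ^ K) * RtoC (q ^ i)) by ring.
    ring. }
  rewrite (qint0_lat _ _ _ _ Hx), (qint0_lat _ _ _ _ Hl). ring.
Qed.

Lemma not_adm q y : ~ adm q y -> exists j, y * RtoC (q ^ j) = 1.
Proof.
  intros H. apply NNPP. intro H'. apply H. intros j E. apply H'. exists j; auto.
Qed.

Lemma qint0_one (q : R) (a b c d x : C) : (0 <= q < 1)%R ->
  (forall m, wf q a b c d (x * RtoC (q ^ m)) = 1) -> qint0 (wf q a b c d) x q = x.
Proof.
  intros Hq H1.
  assert (L : Ccv (psum (lat (wf q a b c d) x q)) (RtoC (/ (1 - q)))).
  { eapply Ccv_ext; [|apply geom_C; auto]. intros n. apply psum_ext. intros k _. unfold lat. rewrite H1. ring. }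
  rewrite (qint0_lat _ _ _ _ L). rewrite <- Cmult_assoc, <- RtoC_mult, Rinv_r by lra. ring.
Qed.

Lemma J_special (q : R) (c d : C) : (0 <= q < 1)%R -> c <> 0 -> d <> 0 ->
  adm q (RtoC q * d / c) -> adm q (RtoC q * c / d) ->
  J q (RtoC q / c) (RtoC q / d) c d = d - c.
Proof.
  intros Hq Hc Hd H1 H2.
  assert (Hqq : adm q (RtoC q)) by (apply adm_small; auto; rewrite Cmod_R, Rabs_right; lra).
  assert (Hw : forall x, adm q (RtoC q * x / c) -> adm q (RtoC q * x / d) ->
            forall m, wf q (RtoC q / c) (RtoC q / d) c d (x * RtoC (q ^ m)) = 1).
  { intros x Ha Hb m. unfold wf.
    replace (RtoC q / c * (x * RtoC (q ^ m))) with (RtoC q * (x * RtoC (q ^ m)) / c) by (field; auto).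
    replace (RtoC q / d * (x * RtoC (q ^ m))) with (RtoC q * (x * RtoC (q ^ m)) / d) by (field; auto).
    field. split.
    - replace (RtoC q * (x * RtoC (q ^ m)) / d) with (RtoC q * x / d * RtoC (q ^ m)) by (field; auto).
      apply inf_nz_lat; auto.
    - replace (RtoC q * (x * RtoC (q ^ m)) / c) with (RtoC q * x / c * RtoC (q ^ m)) by (field; auto).
      apply inf_nz_lat; auto. }
  unfold J, qint. rewrite !qint0_one; auto.
  - apply Hw; auto. apply (adm_eq q (RtoC q)); auto. field; auto.
  - apply Hw; auto. apply (adm_eq q (RtoC q)); auto. field; auto.
Qed.

Lemma J00_val (q : R) (c d : C) : (0 <= q < 1)%R -> c <> 0 -> d <> 0 ->
  J q 0 0 c d = d * RtoC (1 - q) * (qpoch_inf (RtoC q) q * qpoch_inf (d * RtoC q / c) q * qpoch_inf (c / d) q).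
Proof.
  intros Hq Hc Hd.
  assert (Hqq : adm q (RtoC q)) by (apply adm_small; auto; rewrite Cmod_R, Rabs_right; lra).
  destruct (classic (adm q (RtoC q * d / c))) as [H1|H1].
  destruct (classic (adm q (RtoC q * c / d))) as [H2|H2].
  -
    pose proof (JJ00 q (RtoC q / c) (RtoC q / d) c d Hq Hc Hd) as HJ.
    rewrite J_special in HJ by auto.
    replace (RtoC q / c * c) with (RtoC q) in HJ by (field; auto).
    replace (RtoC q / c * d) with (d * RtoC q / c) in HJ by (field; auto).
    replace (RtoC q / d * c) with (c / d * RtoC q) in HJ by (field; auto).
    replace (RtoC q / d * d) with (RtoC q) in HJ by (field; auto).
    replace (RtoC q / c * (RtoC q / d) * c * d) with (RtoC q * RtoC q) in HJ by (field; auto).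
    specialize (HJ Hqq ltac:(apply (adm_eq q (RtoC q * d / c)); [field; auto|auto])
                  ltac:(apply (adm_eq q (RtoC q * c / d)); [field; auto|auto]) Hqq).
    assert (HQ2 : qpoch_inf (RtoC q * RtoC q) q <> 0).
    { apply qpoch_inf_nz; auto. apply adm_small; auto. rewrite <- RtoC_mult, Cmod_R, Rabs_right; nra. }
    rewrite (qpoch_inf_shift1 (RtoC q) q Hq), (qpoch_inf_shift1 (c / d) q Hq) in *.
    transitivity (qpoch_inf (RtoC q * RtoC q) q * J q 0 0 c d / qpoch_inf (RtoC q * RtoC q) q); [field; auto|].
    rewrite <- HJ. rewrite RtoC_minus. field. split; auto.
  - (* c = d q^(j+1) *)
    destruct (not_adm _ _ H2) as [j Hj].
    assert (Hcd : c * RtoC (q ^ S j) = d).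
    { rewrite RtoC_pow_S. replace d with (d * (RtoC q * c / d * RtoC (q ^ j))) by (rewrite Hj; ring). field; auto. }
    rewrite (qpoch_inf_vanish (c / d) q (S j) Hq).
    2:{ rewrite RtoC_pow_S. rewrite <- Hj. field; auto. }
    unfold J, qint. rewrite (qint0_shift _ c q (S j) Hq).
    + rewrite Hcd. ring.
    + intros m Hm. unfold wf. rewrite (qpoch_inf_vanish (RtoC q * (c * RtoC (q ^ m)) / d) q (j - m) Hq). 
      * unfold Cdiv. ring.
      * replace (RtoC q * (c * RtoC (q ^ m)) / d * RtoC (q ^ (j - m))) with (RtoC q * c / d * RtoC (q ^ (m + (j - m)))).
        -- replace (m + (j - m))%nat with j by lia. auto.
        -- rewrite RtoC_pow_add. field; auto.
    + rewrite Hcd. apply wf_conv; auto; apply adm0.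
  - (* d = c q^(j+1) *)
    destruct (not_adm _ _ H1) as [j Hj].
    assert (Hdc : d * RtoC (q ^ S j) = c).
    { rewrite RtoC_pow_S. replace c with (c * (RtoC q * d / c * RtoC (q ^ j))) by (rewrite Hj; ring). field; auto. }
    rewrite (qpoch_inf_vanish (d * RtoC q / c) q j Hq).
    2:{ rewrite <- Hj. field; auto. }
    unfold J, qint. rewrite (qint0_shift _ d q (S j) Hq).
    + rewrite Hdc. ring.
    + intros m Hm. unfold wf. rewrite (qpoch_inf_vanish (RtoC q * (d * RtoC (q ^ m)) / c) q (j - m) Hq). 
      * unfold Cdiv. ring.
      * replace (RtoC q * (d * RtoC (q ^ m)) / c * RtoC (q ^ (j - m))) with (RtoC q * d / c * RtoC (q ^ (m + (j - m)))).
        -- replace (m + (j - m))%nat with j by lia. auto.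
        -- rewrite RtoC_pow_add. field; auto.
    + rewrite Hdc. apply wf_conv; auto; apply adm0.
Qed.

Lemma AV (q : R) (a b c d : C) : (0 <= q < 1)%R -> c <> 0 -> d <> 0 ->
  adm q (a * c) -> adm q (a * d) -> adm q (b * c) -> adm q (b * d) ->
  J q a b c d * (qpoch_inf (a * c) q * qpoch_inf (a * d) q * qpoch_inf (b * c) q * qpoch_inf (b * d) q)
  = qpoch_inf (a * b * c * d) q * (d * RtoC (1 - q) * (qpoch_inf (RtoC q) q * qpoch_inf (d * RtoC q / c) q * qpoch_inf (c / d) q)).
Proof.
  intros. rewrite JJ00 by auto. rewrite J00_val by auto. reflexivity.
Qed.

Lemma Rq_nz q : (0 < q)%R -> RtoC q <> 0.
Proof. intros Hq E. apply RtoC_inj in E. lra. Qed.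

Lemma Rqk_nz q k : (0 < q)%R -> RtoC (q ^ k) <> 0.
Proof. intros Hq E. apply RtoC_inj in E. pose proof (pow_lt q k Hq). lra. Qed.

Lemma REV (q : R) (X Y : C) k : (0 < q < 1)%R -> X <> 0 -> Y <> 0 ->
  qpoch X q k * qpoch (Y / RtoC (q ^ k)) q k =
  Cpow (X * Y / RtoC q) k * qpoch (RtoC q / (X * RtoC (q ^ k))) q k * qpoch (RtoC q / Y) q k.
Proof.
  intros Hq HX HY. assert (Hq0 := Rq_nz q ltac:(lra)).
  induction k.
  - simpl. ring.
  - assert (Hqk := Rqk_nz q k ltac:(lra)).
    rewrite (qpoch_S X), (qpoch_shift1 (Y / RtoC (q ^ S k))), (qpoch_shift1 (RtoC q / (X * RtoC (q ^ S k)))), (qpoch_S (RtoC q / Y)).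
    replace (Y / RtoC (q ^ S k) * RtoC q) with (Y / RtoC (q ^ k)) by (rewrite RtoC_pow_S; field; auto).
    replace (RtoC q / (X * RtoC (q ^ S k)) * RtoC q) with (RtoC q / (X * RtoC (q ^ k))) by (rewrite RtoC_pow_S; field; auto).
    transitivity ((qpoch X q k * qpoch (Y / RtoC (q ^ k)) q k) * ((1 - X * RtoC (q ^ k)) * (1 - Y / RtoC (q ^ S k)))); [ring|].
    rewrite IHk. simpl Cpow. rewrite RtoC_pow_S. field. auto.
Qed.

Lemma inf_split (q : R) (y y' : C) k : (0 <= q < 1)%R -> y * RtoC (q ^ k) = y' ->
  qpoch_inf y q = qpoch y q k * qpoch_inf y' q.
Proof. intros Hq E. rewrite <- E. apply qpoch_inf_shift; auto. Qed.

Lemma rev_nz (q : R) (y : C) k : (0 < q < 1)%R -> y <> 0 -> qpoch (RtoC q / y) q k <> 0 ->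
  qpoch (y / RtoC (q ^ k)) q k <> 0.
Proof.
  intros Hq Hy H. assert (Hq0 := Rq_nz q ltac:(lra)).
  apply qpoch_nz. intros i Hi E. apply H.
  apply (qpoch_vanish _ q (k - 1 - i) k); [lia|].
  assert (Hk : RtoC (q ^ k) = RtoC (q ^ i) * RtoC (q ^ (k - 1 - i)) * RtoC q).
  { rewrite <- !RtoC_mult. f_equal. rewrite <- pow_add.
    replace (q ^ (i + (k - 1 - i)) * q)%R with (q ^ S (i + (k - 1 - i)))%R by (simpl; ring). f_equal. lia. }
  assert (Hy' : y = RtoC (q ^ k) / RtoC (q ^ i)).
  { assert (Hqi := Rqk_nz q i ltac:(lra)). assert (Hqk := Rqk_nz q k ltac:(lra)).
    transitivity (y / RtoC (q ^ k) * RtoC (q ^ i) * (RtoC (q ^ k) / RtoC (q ^ i))); [field; auto|].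
    rewrite E. ring. }
  rewrite Hy', Hk. field. repeat split; auto; apply Rqk_nz; lra.
Qed.

Lemma adm_div (q : R) (y : C) k : (0 < q < 1)%R -> (Cmod y < 1)%R -> (forall K, qpoch (RtoC q / y) q K <> 0) ->
  adm q (y / RtoC (q ^ k)).
Proof.
  intros Hq Hy H j E.
  assert (Hy0 : y <> 0).
  { intro Z. rewrite Z in E. unfold Cdiv in E. rewrite !Cmult_0_l in E. apply C1_nz. auto. }
  destruct (Nat.lt_ge_cases j k) as [Hjk|Hjk].
  - apply (rev_nz q y k Hq Hy0 (H k)). apply (qpoch_vanish _ q j k); auto.
  - assert (E' : y * RtoC (q ^ (j - k)) = 1).
    { rewrite <- E. replace j with (k + (j - k))%nat at 2 by lia. rewrite RtoC_pow_add. field. apply Rqk_nz; lra. }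
    pose proof (Cmod_xq y q (j - k) ltac:(lra)). rewrite E', Cmod_1 in H0. lra.
Qed.

Lemma Cdiv_nz (x y : C) : x <> 0 -> y <> 0 -> x / y <> 0.
Proof. intros Hx Hy E. apply Hx. replace x with (x / y * y) by (field; auto). rewrite E. ring. Qed.

Lemma pw (q : R) (a b c d t : C) k : (0 < q < 1)%R -> c <> 0 -> d <> 0 -> a <> 0 -> t <> 0 ->
  qpoch (RtoC q / (a * t)) q k <> 0 -> qpoch_inf (a * t) q <> 0 -> qpoch_inf (b * t) q <> 0 ->
  wf q a b c d t * (qpoch (c / t) q k / qpoch (RtoC q / (a * t)) q k)
  = Cpow (a * c / RtoC q) k * wf q (a / RtoC (q ^ k)) b (c * RtoC (q ^ k)) d t.
Proof.
  intros Hq Hc Hd Ha Ht HQ HA HB.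
  assert (Hq0 := Rq_nz q ltac:(lra)). assert (Hqk := Rqk_nz q k ltac:(lra)).
  assert (Hat : a * t <> 0) by (apply Cmult_neq_0; auto).
  assert (HY : qpoch (a * t / RtoC (q ^ k)) q k <> 0) by (apply rev_nz; auto).
  pose proof (REV q (c / t) (a * t) k Hq (Cdiv_nz _ _ Hc Ht) Hat) as R.
  replace (c / t * (a * t) / RtoC q) with (a * c / RtoC q) in R by (field; auto).
  replace (RtoC q / (c / t * RtoC (q ^ k))) with (RtoC q * t / (c * RtoC (q ^ k))) in R by (field; auto).
  unfold wf.
  rewrite (inf_split q (RtoC q * t / (c * RtoC (q ^ k))) (RtoC q * t / c) k) by (lra || (field; auto)).
  rewrite (inf_split q (a / RtoC (q ^ k) * t) (a * t) k) by (lra || (field; auto)).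
  replace (a / RtoC (q ^ k) * t) with (a * t / RtoC (q ^ k)) by (field; auto).
  replace (qpoch (c / t) q k) with (Cpow (a * c / RtoC q) k * qpoch (RtoC q * t / (c * RtoC (q ^ k))) q k * qpoch (RtoC q / (a * t)) q k / qpoch (a * t / RtoC (q ^ k)) q k)
    by (rewrite <- R; field; auto).
  field. repeat split; auto.
Qed.

Lemma qpoch_nz_adm q y k : adm q y -> qpoch y q k <> 0.
Proof. intros H. apply qpoch_nz. intros j _. apply H. Qed.

Lemma key (q : R) (a b c d : C) k : (0 < q < 1)%R -> a <> 0 -> c <> 0 -> d <> 0 ->
  adm q (a * c) -> adm q (a * d) -> adm q (b * c) -> adm q (b * d) -> adm q (a * d / RtoC (q ^ k)) ->
  Cpow (a * c / RtoC q) k * qpoch (RtoC q / (a * d)) q k * J q (a / RtoC (q ^ k)) b (c * RtoC (q ^ k)) d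
  = d * RtoC (1 - q) * (qpoch_inf (RtoC q) q * qpoch_inf (d * RtoC q / c) q * qpoch_inf (c / d) q * qpoch_inf (a * b * c * d) q)
     / (qpoch_inf (a * c) q * qpoch_inf (a * d) q * qpoch_inf (b * c) q * qpoch_inf (b * d) q) * qpoch (b * c) q k.
Proof.
  intros Hq Ha Hc Hd Hac Had Hbc Hbd Hadk.
  assert (Hq' : (0 <= q < 1)%R) by lra.
  assert (Hq0 := Rq_nz q ltac:(lra)). assert (Hqk := Rqk_nz q k ltac:(lra)).
  assert (Hbck : adm q (b * (c * RtoC (q ^ k)))) by (apply (adm_eq q (b * c * RtoC (q ^ k))); [ring|apply adm_lat; auto]).
  pose proof (AV q (a / RtoC (q ^ k)) b (c * RtoC (q ^ k)) d Hq' ltac:(apply Cmult_neq_0; auto) Hd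
     ltac:(apply (adm_eq q (a * c)); [field; auto|auto])
     ltac:(apply (adm_eq q (a * d / RtoC (q ^ k))); [field; auto|auto]) Hbck Hbd) as AV2.
  replace (a / RtoC (q ^ k) * (c * RtoC (q ^ k))) with (a * c) in AV2 by (field; auto).
  replace (a / RtoC (q ^ k) * b * (c * RtoC (q ^ k)) * d) with (a * b * c * d) in AV2 by (field; auto).
  replace (a / RtoC (q ^ k) * d) with (a * d / RtoC (q ^ k)) in AV2 by (field; auto).
  rewrite (inf_split q (a * d / RtoC (q ^ k)) (a * d) k) in AV2 by (lra || (field; auto)).
  rewrite (inf_split q (d * RtoC q / (c * RtoC (q ^ k))) (d * RtoC q / c) k) in AV2 by (lra || (field; auto)).
  rewrite (inf_split q (c / d) (c * RtoC (q ^ k) / d) k) by (lra || (field; auto)).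
  rewrite (inf_split q (b * c) (b * (c * RtoC (q ^ k))) k) by (lra || ring).
  pose proof (REV q (c / d) (a * d) k Hq (Cdiv_nz _ _ Hc Hd) ltac:(apply Cmult_neq_0; auto)) as R.
  replace (c / d * (a * d) / RtoC q) with (a * c / RtoC q) in R by (field; auto).
  replace (RtoC q / (c / d * RtoC (q ^ k))) with (d * RtoC q / (c * RtoC (q ^ k))) in R by (field; auto).
  set (J2 := J q (a / RtoC (q ^ k)) b (c * RtoC (q ^ k)) d) in *.
  assert (N1 : qpoch_inf (a * c) q <> 0) by (apply qpoch_inf_nz; auto).
  assert (N2 : qpoch_inf (a * d) q <> 0) by (apply qpoch_inf_nz; auto).
  assert (N3 : qpoch_inf (b * (c * RtoC (q ^ k))) q <> 0) by (apply qpoch_inf_nz; auto).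
  assert (N4 : qpoch_inf (b * d) q <> 0) by (apply qpoch_inf_nz; auto).
  assert (N5 : qpoch (a * d / RtoC (q ^ k)) q k <> 0) by (apply qpoch_nz_adm; auto).
  assert (N6 : qpoch (b * c) q k <> 0) by (apply qpoch_nz_adm; auto).
  set (D2 := qpoch_inf (a * c) q * (qpoch (a * d / RtoC (q ^ k)) q k * qpoch_inf (a * d) q) * qpoch_inf (b * (c * RtoC (q ^ k))) q * qpoch_inf (b * d) q) in AV2.
  assert (HD2 : D2 <> 0) by (unfold D2; repeat apply Cmult_neq_0; auto).
  assert (HJ : J2 = J2 * D2 / D2) by (field; auto). rewrite AV2 in HJ. rewrite HJ. unfold D2.
  replace (qpoch (c / d) q k) with (Cpow (a * c / RtoC q) k * qpoch (d * RtoC q / (c * RtoC (q ^ k))) q k * qpoch (RtoC q / (a * d)) q k / qpoch (a * d / RtoC (q ^ k)) q k)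
    by (rewrite <- R; field; auto).
  field. repeat split; auto.
Qed.

Lemma qbin2_S q j : qbin2 q (S j) = (qbin2 q j * q ^ j)%R.
Proof.
  unfold qbin2. rewrite <- pow_add. f_equal.
  replace (S j * (S j - 1))%nat with (j * (j - 1) + j * 2)%nat.
  - rewrite Nat.div_add by lia. lia.
  - destruct j; simpl; [reflexivity|]. rewrite Nat.sub_0_r. nia.
Qed.

Definition ee (q : R) (j : nat) : C := RtoC ((-1) ^ j * qbin2 q j) / qpoch (RtoC q) q j.

Lemma qq_nz q j : (0 < q < 1)%R -> qpoch (RtoC q) q j <> 0.
Proof.
  intros Hq. apply qpoch_nz. intros i _ E. rewrite <- RtoC_mult in E. apply RtoC_inj in E.
  assert (q * q ^ i < 1)%R. { assert (q ^ i <= 1)%R by (apply pow_le1; lra). assert (0 <= q ^ i)%R by (apply pow_le; lra). nra. }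
  lra.
Qed.

Lemma ee_S q j : (0 < q < 1)%R -> ee q (S j) * (1 - RtoC (q ^ S j)) = - RtoC (q ^ j) * ee q j.
Proof.
  intros Hq. unfold ee. rewrite qpoch_S, qbin2_S.
  assert (H1 : qpoch (RtoC q) q j <> 0) by (apply qq_nz; auto).
  assert (H2 : 1 - RtoC q * RtoC (q ^ j) <> 0).
  { rewrite <- RtoC_mult. apply Cminus_eq_contra. intro E. apply RtoC_inj in E.
    assert (q ^ j <= 1)%R by (apply pow_le1; lra). assert (0 <= q ^ j)%R by (apply pow_le; lra). nra. }
  replace (RtoC (q ^ S j)) with (RtoC q * RtoC (q ^ j)) by (rewrite <- RtoC_mult; f_equal).
  replace (RtoC ((-1) ^ S j * (qbin2 q j * q ^ j))) with (- RtoC (q ^ j) * RtoC ((-1) ^ j * qbin2 q j))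
    by (rewrite <- RtoC_opp, <- RtoC_mult; f_equal; simpl; ring).
  field. auto.
Qed.

Definition AA (q : R) (x : C) (k : nat) : C := qpoch x q k / qpoch (RtoC q) q k.

Lemma AA_S q x k : (0 < q < 1)%R -> AA q x (S k) * (1 - RtoC (q ^ S k)) = (1 - x * RtoC (q ^ k)) * AA q x k.
Proof.
  intros Hq. unfold AA. rewrite !qpoch_S.
  assert (H1 : qpoch (RtoC q) q k <> 0) by (apply qq_nz; auto).
  assert (H2 : 1 - RtoC q * RtoC (q ^ k) <> 0).
  { rewrite <- RtoC_mult. apply Cminus_eq_contra. intro E. apply RtoC_inj in E.
    assert (q ^ k <= 1)%R by (apply pow_le1; lra). assert (0 <= q ^ k)%R by (apply pow_le; lra). nra. }
  replace (RtoC (q ^ S k)) with (RtoC q * RtoC (q ^ k)) by (rewrite <- RtoC_mult; f_equal).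
  field. auto.
Qed.

Lemma psum_S u n : psum u (S n) = psum u n + u n.
Proof. reflexivity. Qed.

Definition TT (q : R) (x : C) (n : nat) : C := psum (fun k => AA q x k * ee q (n - k)) (S n).

Lemma TT_rec q x n : (0 < q < 1)%R -> (1 - RtoC (q ^ S n)) * TT q x (S n) = - x * RtoC (q ^ n) * TT q x n.
Proof.
  intros Hq. unfold TT.
  rewrite <- psum_scal.
  rewrite (psum_ext _ (fun k => AA q x k * ee q (S n - k) * (1 - RtoC (q ^ (S n - k))) +
                               AA q x k * ee q (S n - k) * (RtoC (q ^ (S n - k)) * (1 - RtoC (q ^ k))))).
  2:{ intros k Hk. replace (RtoC (q ^ S n)) with (RtoC (q ^ (S n - k)) * RtoC (q ^ k)).
      - ring.
      - rewrite <- RtoC_pow_add. f_equal. f_equal. lia. }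
  rewrite psum_plus.
  replace (psum (fun k => AA q x k * ee q (S n - k) * (1 - RtoC (q ^ (S n - k)))) (S (S n)))
    with (psum (fun k => - RtoC (q ^ (n - k)) * (AA q x k * ee q (n - k))) (S n)).
  2:{ rewrite (psum_S _ (S n)). replace (S n - S n)%nat with O by lia.
      replace (1 - RtoC (q ^ 0)) with (RtoC 0) by (simpl; ring).
      rewrite Cmult_0_r, Cplus_0_r. apply psum_ext. intros k Hk.
      replace (S n - k)%nat with (S (n - k)) by lia.
      transitivity (AA q x k * (ee q (S (n - k)) * (1 - RtoC (q ^ S (n - k))))); [rewrite ee_S; auto; ring | ring]. }
  replace (psum (fun k => AA q x k * ee q (S n - k) * (RtoC (q ^ (S n - k)) * (1 - RtoC (q ^ k)))) (S (S n)))
    with (psum (fun k => (1 - x * RtoC (q ^ k)) * RtoC (q ^ (n - k)) * (AA q x k * ee q (n - k))) (S n)).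
  2:{ rewrite (psum_shift _ (S n)). replace (1 - RtoC (q ^ 0)) with (RtoC 0) by (simpl; ring).
      rewrite Cmult_0_r, Cmult_0_r, Cplus_0_l. apply psum_ext. intros k Hk.
      replace (S n - S k)%nat with (n - k)%nat by lia.
      transitivity ((AA q x (S k) * (1 - RtoC (q ^ S k))) * ee q (n - k) * RtoC (q ^ (n - k))); [rewrite AA_S; auto; ring | ring]. }
  rewrite <- psum_scal, <- psum_plus. apply psum_ext. intros k Hk.
  replace (RtoC (q ^ n)) with (RtoC (q ^ k) * RtoC (q ^ (n - k))).
  - ring.
  - rewrite <- RtoC_pow_add. f_equal. f_equal. lia.
Qed.

Lemma TT_val q x n : (0 < q < 1)%R -> TT q x n = ee q n * Cpow x n.
Proof.
  intros Hq. induction n.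
  - unfold TT, AA, ee. simpl. unfold qbin2. simpl. field.
  - assert (H : 1 - RtoC (q ^ S n) <> 0).
    { apply Cminus_eq_contra. intro E. apply RtoC_inj in E.
      assert (q ^ S n < 1)%R by (apply pow_lt_1_compat; [lra|lia]). lra. }
    transitivity (((1 - RtoC (q ^ S n)) * TT q x (S n)) / (1 - RtoC (q ^ S n))); [field; auto|].
    rewrite TT_rec, IHn by auto.
    replace (ee q (S n)) with (- RtoC (q ^ n) * ee q n / (1 - RtoC (q ^ S n))) by (rewrite <- ee_S by auto; field; auto).
    simpl Cpow. field. auto.
Qed.

Lemma triangle (F : nat -> nat -> C) N :
  psum (fun k => psum (fun m => F k m) (N - k)) N = psum (fun n => psum (fun k => F k (n - k)%nat) (S n)) N.
Proof.
  induction N; [reflexivity|].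
  transitivity (psum (fun k => psum (fun m => F k m) (N - k)) N + psum (fun k => F k (N - k)%nat) (S N)).
  - rewrite (psum_ext (fun k => psum (fun m => F k m) (S N - k)) (fun k => psum (fun m => F k m) (N - k) + F k (N - k)%nat)).
    + rewrite psum_plus. rewrite (psum_S (fun k => psum (fun m => F k m) (N - k))). rewrite Nat.sub_diag. simpl (psum _ 0).
      ring.
    + intros k Hk. replace (S N - k)%nat with (S (N - k)) by lia. reflexivity.
  - rewrite IHN. reflexivity.
Qed.

Lemma Ccv_psum_lin (u : nat -> nat -> C) (Lk al : nat -> C) N :
  (forall k, (k < N)%nat -> Ccv (psum (u k)) (Lk k)) ->
  Ccv (psum (fun n => psum (fun k => al k * u k n) N)) (psum (fun k => al k * Lk k) N).
Proof.
  induction N; intros H.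
  - simpl. eapply Ccv_ext; [|apply Ccv_const]. intros n. simpl. induction n; simpl; [auto|]. rewrite <- IHn. ring.
  - simpl. eapply Ccv_ext; [|apply Ccv_plus; [apply IHN; intros; apply H; lia|apply Cseries_scal; apply H; lia]].
    intros n. cbv beta. rewrite <- psum_plus. apply psum_ext. intros; simpl. reflexivity.
Qed.

Lemma psum_mult_r (u : nat -> C) c N : psum u N * c = psum (fun k => u k * c) N.
Proof. induction N; simpl; [ring|]. rewrite <- IHN. ring. Qed.

Lemma qint0_lin (F : C -> C) (G : nat -> C -> C) (al : nat -> C) (x : C) (q : R) N :
  (forall m, F (x * RtoC (q ^ m)) = psum (fun k => al k * G k (x * RtoC (q ^ m))) N) ->
  (forall k, (k < N)%nat -> exists l, Ccv (psum (lat (G k) x q)) l) ->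
  qint0 F x q = psum (fun k => al k * qint0 (G k) x q) N.
Proof.
  intros HF HG.
  assert (HG' : forall k, (k < N)%nat -> Ccv (psum (lat (G k) x q)) (Cseries (lat (G k) x q))).
  { intros k Hk. destruct (HG k Hk) as [l Hl]. rewrite (Cseries_cv _ _ Hl). auto. }
  assert (L := Ccv_psum_lin (fun k => lat (G k) x q) (fun k => Cseries (lat (G k) x q)) al N HG').
  assert (L' : Ccv (psum (lat F x q)) (psum (fun k => al k * Cseries (lat (G k) x q)) N)).
  { eapply Ccv_ext; [|exact L]. intros n. apply psum_ext. intros m _. unfold lat. rewrite HF, psum_mult_r.
    apply psum_ext. intros; ring. }
  rewrite (qint0_lat _ _ _ _ L'). rewrite <- psum_scal. apply psum_ext. intros k _.
  unfold qint0. fold (lat (G k) x q). ring.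
Qed.

Lemma Cpow_mult (x y : C) n : Cpow (x * y) n = Cpow x n * Cpow y n.
Proof. induction n; simpl; [ring|]. rewrite IHn. ring. Qed.

Lemma Cpow_add (x : C) n m : Cpow x (n + m) = Cpow x n * Cpow x m.
Proof. induction n; simpl; [ring|]. rewrite IHn. ring. Qed.

Definition Cn (q : R) (r f g v w z : C) (n : nat) : C :=
  qpoch r q n * qpoch f q n * qpoch g q n * Cpow z n / (qpoch v q n * qpoch w q n).

Definition Bkm (q : R) (r f g v w z : C) (k m : nat) : C :=
  RtoC ((-1) ^ m * qbin2 q m) *
    (qpoch (r * RtoC (q ^ k)) q m * qpoch (f * RtoC (q ^ k)) q m * qpoch (g * RtoC (q ^ k)) q m) /
    (qpoch (v * RtoC (q ^ k)) q m * qpoch (w * RtoC (q ^ k)) q m * qpoch 0 q m) * Cpow z m / qpoch (RtoC q) q m.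

Definition coefk (q : R) (r f g v w z : C) (k : nat) : C :=
  qpoch r q k * qpoch f q k * qpoch g q k * Cpow z k / (qpoch v q k * qpoch w q k * qpoch (RtoC q) q k).

Lemma Fkm_id (q : R) (r f g v w z x : C) k m : (0 < q < 1)%R ->
  (forall k, qpoch v q k <> 0) -> (forall k, qpoch w q k <> 0) ->
  coefk q r f g v w z k * qpoch x q k * Bkm q r f g v w z k m = Cn q r f g v w z (k + m) * (AA q x k * ee q m).
Proof.
  intros Hq Hv Hw. unfold coefk, Bkm, Cn, AA, ee.
  assert (Hvk : qpoch (v * RtoC (q ^ k)) q m <> 0) by (intro E; apply (Hv (k + m)%nat); rewrite qpoch_add, E; ring).
  assert (Hwk : qpoch (w * RtoC (q ^ k)) q m <> 0) by (intro E; apply (Hw (k + m)%nat); rewrite qpoch_add, E; ring).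
  rewrite !(qpoch_add _ q k m), Cpow_add, qpoch_zero.
  field. repeat split; auto; apply qq_nz; auto.
Qed.

Lemma Phi33_fin (q : R) (M : nat) (r a2 a3 b1 b2 b3 z : C) N : r * RtoC (q ^ M) = 1 -> (M < N)%nat ->
  Phi33 r a2 a3 b1 b2 b3 q z =
  psum (fun n => RtoC ((-1) ^ n * qbin2 q n) * (qpoch r q n * qpoch a2 q n * qpoch a3 q n) /
    (qpoch b1 q n * qpoch b2 q n * qpoch b3 q n) * Cpow z n / qpoch (RtoC q) q n) N.
Proof.
  intros Hr HN. unfold Phi33. apply Cseries_finite. intros n Hn.
  rewrite (qpoch_vanish r q M n) by (auto; lia). unfold Cdiv. ring.
Qed.

Lemma final_sum (q : R) (M : nat) (r f g v w z x : C) : (0 < q < 1)%R -> r * RtoC (q ^ M) = 1 ->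
  (forall k, qpoch v q k <> 0) -> (forall k, qpoch w q k <> 0) ->
  psum (fun k => coefk q r f g v w z k *
     Phi33 (r * RtoC (q ^ k)) (f * RtoC (q ^ k)) (g * RtoC (q ^ k)) (v * RtoC (q ^ k)) (w * RtoC (q ^ k)) 0 q z
     * qpoch x q k) (S M)
  = Phi33 r f g v w 0 q (z * x).
Proof.
  intros Hq Hr Hv Hw.
  rewrite (Phi33_fin q M r f g v w 0 (z * x) (S M) Hr ltac:(lia)).
  rewrite (psum_ext _ (fun k => psum (fun m => coefk q r f g v w z k * qpoch x q k * Bkm q r f g v w z k m) (S M - k))).
  2:{ intros k Hk. rewrite (Phi33_fin q (M - k) (r * RtoC (q ^ k)) _ _ _ _ _ z (S M - k)).
      - match goal with |- _ * psum ?u _ * _ = _ => transitivity ((coefk q r f g v w z k * qpoch x q k) * psum u (S M - k)); [ring|] end.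
        rewrite <- psum_scal. apply psum_ext. intros m _. unfold Bkm. ring.
      - rewrite <- Cmult_assoc, <- RtoC_pow_add. replace (k + (M - k))%nat with M by lia. auto.
      - lia. }
  rewrite (triangle (fun k m => coefk q r f g v w z k * qpoch x q k * Bkm q r f g v w z k m) (S M)).
  apply psum_ext. intros n Hn.
  rewrite (psum_ext _ (fun k => Cn q r f g v w z n * (AA q x k * ee q (n - k)))).
  2:{ intros k Hk. rewrite Fkm_id by auto. replace (k + (n - k))%nat with n by lia. reflexivity. }
  rewrite psum_scal. fold (TT q x n). rewrite TT_val by auto.
  unfold Cn, ee. rewrite Cpow_mult, qpoch_zero. field.
  repeat split; auto; apply qq_nz; auto.
Qed.

Definition Phik (q : R) (r f g v w z : C) (k : nat) : C :=
  Phi33 (r * RtoC (q ^ k)) (f * RtoC (q ^ k)) (g * RtoC (q ^ k)) (v * RtoC (q ^ k)) (w * RtoC (q ^ k)) 0 q z.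

Definition alk (q : R) (a c d r f g v w z : C) (k : nat) : C :=
  coefk q r f g v w z k * Phik q r f g v w z k * qpoch (RtoC q / (a * d)) q k * Cpow (a * c / RtoC q) k.

Lemma integrand_pt (q : R) (M : nat) (a b c d f g v w r z t : C) : (0 < q < 1)%R ->
  a <> 0 -> c <> 0 -> d <> 0 -> t <> 0 -> r * RtoC (q ^ M) = 1 ->
  (forall k, qpoch v q k <> 0) -> (forall k, qpoch w q k <> 0) ->
  (forall k, qpoch (RtoC q / (a * t)) q k <> 0) ->
  qpoch_inf (a * t) q <> 0 -> qpoch_inf (b * t) q <> 0 ->
  wf q a b c d t * Cseries (fun k =>
          qpoch r q k * qpoch f q k * qpoch g q k * qpoch (c / t) q k
            * qpoch (RtoC q / (a * d)) q k * Cpow z k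
          / (qpoch v q k * qpoch w q k * qpoch (RtoC q / (a * t)) q k
             * qpoch (RtoC q) q k)
          * Phi33 (r * RtoC (q ^ k)) (f * RtoC (q ^ k)) (g * RtoC (q ^ k))
                  (v * RtoC (q ^ k)) (w * RtoC (q ^ k)) 0 q z)
  = psum (fun k => alk q a c d r f g v w z k * wf q (a / RtoC (q ^ k)) b (c * RtoC (q ^ k)) d t) (S M).
Proof.
  intros Hq Ha Hc Hd Ht Hr Hv Hw HQ HA HB.
  rewrite (Cseries_finite _ (S M)).
  2:{ intros k Hk. rewrite (qpoch_vanish r q M k) by (auto; lia). unfold Cdiv. ring. }
  rewrite <- psum_scal. apply psum_ext. intros k _.
  transitivity (coefk q r f g v w z k * Phik q r f g v w z k * qpoch (RtoC q / (a * d)) q k *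
                (wf q a b c d t * (qpoch (c / t) q k / qpoch (RtoC q / (a * t)) q k))).
  - unfold coefk, Phik. field. repeat split; auto. apply qq_nz; auto.
  - rewrite pw by auto. unfold alk. ring.
Qed.

Lemma G_vanish (q : R) (a b c d : C) k m : (0 < q < 1)%R -> c <> 0 -> (m < k)%nat ->
  wf q (a / RtoC (q ^ k)) b (c * RtoC (q ^ k)) d (c * RtoC (q ^ m)) = 0.
Proof.
  intros Hq Hc Hm. assert (Hq0 := Rq_nz q ltac:(lra)).
  unfold wf. rewrite (qpoch_inf_vanish (RtoC q * (c * RtoC (q ^ m)) / (c * RtoC (q ^ k))) q (k - 1 - m)).
  - unfold Cdiv. ring.
  - lra.
  - assert (Hk : RtoC (q ^ k) = RtoC (q ^ m) * RtoC (q ^ (k - 1 - m)) * RtoC q).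
    { rewrite <- !RtoC_mult. f_equal. rewrite <- pow_add.
      replace (q ^ (m + (k - 1 - m)) * q)%R with (q ^ S (m + (k - 1 - m)))%R by (simpl; ring). f_equal. lia. }
    rewrite Hk. field. repeat split; auto; apply Rqk_nz; lra.
Qed.

Lemma psum_minus (u v : nat -> C) n : psum u n - psum v n = psum (fun k => u k - v k) n.
Proof. induction n; simpl; [ring|]. rewrite <- IHn. ring. Qed.

Theorem theorem7 (q : R) (M : nat) (a b c d f g v w : C) :
  (0 < q < 1)%R ->
  (Cmod (a * c) < 1)%R -> (Cmod (a * d) < 1)%R ->
  (Cmod (b * c) < 1)%R -> (Cmod (b * d) < 1)%R ->
  (* non-degeneracy: all expressions in the identity are well defined *)
  a <> 0 -> c <> 0 -> d <> 0 -> f <> 0 -> g <> 0 ->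
  (forall k : nat, qpoch v q k <> 0) ->
  (forall k : nat, qpoch w q k <> 0) ->
  (forall n k : nat, qpoch (RtoC q / (a * (c * RtoC (q ^ n)))) q k <> 0) ->
  (forall n k : nat, qpoch (RtoC q / (a * (d * RtoC (q ^ n)))) q k <> 0) ->
  let r : C := RtoC (/ (q ^ M))%R in
  let z : C := v * w / (r * f * g) in
  qint (fun t =>
      qpoch_inf (RtoC q * t / c) q * qpoch_inf (RtoC q * t / d) q
      / (qpoch_inf (a * t) q * qpoch_inf (b * t) q)
      * Cseries (fun k =>
          qpoch r q k * qpoch f q k * qpoch g q k * qpoch (c / t) q k
            * qpoch (RtoC q / (a * d)) q k * Cpow z k
          / (qpoch v q k * qpoch w q k * qpoch (RtoC q / (a * t)) q k
             * qpoch (RtoC q) q k)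
          * Phi33 (r * RtoC (q ^ k)) (f * RtoC (q ^ k)) (g * RtoC (q ^ k))
                  (v * RtoC (q ^ k)) (w * RtoC (q ^ k)) 0 q z))
    c d q
  = d * RtoC (1 - q)
      * (qpoch_inf (RtoC q) q * qpoch_inf (d * RtoC q / c) q
         * qpoch_inf (c / d) q * qpoch_inf (a * b * c * d) q)
      / (qpoch_inf (a * c) q * qpoch_inf (a * d) q
         * qpoch_inf (b * c) q * qpoch_inf (b * d) q)
      * Phi33 r f g v w 0 q (v * w * b * c / (r * f * g)).
Proof.
  intros Hq Hac Had Hbc Hbd Ha Hc Hd Hf Hg Hv Hw HCc HCd r z.
  assert (Hq' : (0 <= q < 1)%R) by lra.
  assert (Hq0 := Rq_nz q ltac:(lra)).
  assert (HqM : (q ^ M <> 0)%R) by (apply pow_nonzero; lra).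
  assert (Hr : r * RtoC (q ^ M) = 1) by (unfold r; rewrite <- RtoC_mult, Rinv_l; auto).
  assert (Hr0 : r <> 0) by (intro E; rewrite E in Hr; rewrite Cmult_0_l in Hr; apply C1_nz; auto).
  assert (Aac : adm q (a * c)) by (apply adm_small; auto).
  assert (Aad : adm q (a * d)) by (apply adm_small; auto).
  assert (Abc : adm q (b * c)) by (apply adm_small; auto).
  assert (Abd : adm q (b * d)) by (apply adm_small; auto).
  assert (HCc0 : forall K, qpoch (RtoC q / (a * c)) q K <> 0).
  { intros K. replace (a * c) with (a * (c * RtoC (q ^ 0))) by (simpl; ring). apply HCc. }
  assert (HCd0 : forall K, qpoch (RtoC q / (a * d)) q K <> 0).
  { intros K. replace (a * d) with (a * (d * RtoC (q ^ 0))) by (simpl; ring). apply HCd. }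
  assert (Aack : forall k, adm q (a * c / RtoC (q ^ k))) by (intros; apply adm_div; auto).
  assert (Aadk : forall k, adm q (a * d / RtoC (q ^ k))) by (intros; apply adm_div; auto).
  set (G := fun k => wf q (a / RtoC (q ^ k)) b (c * RtoC (q ^ k)) d).
  set (al := alk q a c d r f g v w z).
  assert (Hlat : forall x : C, x <> 0 -> adm q (a * x) -> adm q (b * x) ->
            (forall n k, qpoch (RtoC q / (a * (x * RtoC (q ^ n)))) q k <> 0) ->
            (forall k, adm q (a / RtoC (q ^ k) * x)) ->
            qint0 (fun t =>
      qpoch_inf (RtoC q * t / c) q * qpoch_inf (RtoC q * t / d) q
      / (qpoch_inf (a * t) q * qpoch_inf (b * t) q)
      * Cseries (fun k =>
          qpoch r q k * qpoch f q k * qpoch g q k * qpoch (c / t) q k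
            * qpoch (RtoC q / (a * d)) q k * Cpow z k
          / (qpoch v q k * qpoch w q k * qpoch (RtoC q / (a * t)) q k
             * qpoch (RtoC q) q k)
          * Phi33 (r * RtoC (q ^ k)) (f * RtoC (q ^ k)) (g * RtoC (q ^ k))
                  (v * RtoC (q ^ k)) (w * RtoC (q ^ k)) 0 q z)) x q
            = psum (fun k => al k * qint0 (G k) x q) (S M)).
  { intros x Hx Hax Hbx HCx Hakx. apply qint0_lin.
    - intros m. assert (Ht : x * RtoC (q ^ m) <> 0) by (apply Cmult_neq_0; auto; apply Rqk_nz; lra).
      apply (integrand_pt q M a b c d f g v w r z (x * RtoC (q ^ m))); auto.
      + replace (a * (x * RtoC (q ^ m))) with (a * x * RtoC (q ^ m)) by ring. apply inf_nz_lat; auto.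
      + replace (b * (x * RtoC (q ^ m))) with (b * x * RtoC (q ^ m)) by ring. apply inf_nz_lat; auto.
    - intros k _. unfold G. apply wf_conv; auto. }
  unfold qint. rewrite !Hlat; auto.
  2:{ intros k. apply (adm_eq q (a * c / RtoC (q ^ k))); [field; apply Rqk_nz; lra|auto]. }
  2:{ intros k. apply (adm_eq q (a * d / RtoC (q ^ k))); [field; apply Rqk_nz; lra|auto]. }
  rewrite psum_minus.
  rewrite (psum_ext _ (fun k => d * RtoC (1 - q)
      * (qpoch_inf (RtoC q) q * qpoch_inf (d * RtoC q / c) q
         * qpoch_inf (c / d) q * qpoch_inf (a * b * c * d) q)
      / (qpoch_inf (a * c) q * qpoch_inf (a * d) q
         * qpoch_inf (b * c) q * qpoch_inf (b * d) q) * (coefk q r f g v w z k * Phik q r f g v w z k * qpoch (b * c) q k))).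
  2:{ intros k Hk.
      rewrite (qint0_shift (G k) c q k Hq').
      2:{ intros m Hm. unfold G. apply G_vanish; auto. }
      2:{ unfold G. apply wf_conv; auto.
          - apply (adm_eq q (a * c)); auto. field. apply Rqk_nz; lra.
          - apply (adm_eq q (b * c * RtoC (q ^ k))); [ring|apply adm_lat; auto]. }
      replace (al k * qint0 (G k) d q - al k * qint0 (G k) (c * RtoC (q ^ k)) q)
        with (coefk q r f g v w z k * Phik q r f g v w z k *
              (Cpow (a * c / RtoC q) k * qpoch (RtoC q / (a * d)) q k * J q (a / RtoC (q ^ k)) b (c * RtoC (q ^ k)) d))
        by (unfold al, alk, J, qint, G; ring).
      rewrite key; auto. ring. }
  rewrite psum_scal. f_equal.
  replace (v * w * b * c / (r * f * g)) with (z * (b * c)) by (unfold z; field; auto).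
  rewrite <- (final_sum q M r f g v w z (b * c) Hq Hr Hv Hw).
  apply psum_ext. intros k _. unfold Phik. ring.
Qed.
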